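(* Let $A\in M_2(\mathbb{Z})$ be an expanding matrix with $|\det(A)|=3$, let $k\in\mathbb{Z}\setminus\{0\}$, and let $v\in\mathbb{R}^2$ be such that $\{v,Av\}$ is linearly independent. Let $\mathcal{D}=\{0,v,kAv\}$. Then the self-affine set $T(A,\mathcal{D})$ is connected if and only if $k=\pm1$.
   Context: A real square matrix is expanding if all its eigenvalues have modulus strictly larger than $1$. For an expanding matrix $A\in M_n(\mathbb{Z})$ and a finite set $\mathcal{D}\subset\mathbb{R}^n$ with $|\mathcal D|=|\det A|$, the self-affine set $T(A,\mathcal{D})$ is the unique nonempty compact set $T$ with $AT=T+\mathcal{D}$; equivalently $T=\{\sum_{i=1}^\infty A^{-i}d_{j_i}: d_{j_i}\in\mathcal{D}\}$. *)

(* Defs.v *)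
From Stdlib Require Import Reals Lra ZArith List.
Open Scope R_scope.

Definition pt : Type := (R * R)%type.

Definition padd (p q : pt) : pt := (fst p + fst q, snd p + snd q).
Definition pscale (r : R) (p : pt) : pt := (r * fst p, r * snd p).
Definition pzero : pt := (0, 0).

Record mat2Z := Mat2Z { m11 : Z; m12 : Z; m21 : Z; m22 : Z }.

Definition detZ (A : mat2Z) : Z := (m11 A * m22 A - m12 A * m21 A)%Z.

Definition mapply (A : mat2Z) (p : pt) : pt :=
  (IZR (m11 A) * fst p + IZR (m12 A) * snd p,
   IZR (m21 A) * fst p + IZR (m22 A) * snd p).

(* Action of the real inverse matrix A^{-1} on R^2 (meaningful when det A <> 0). *)
Definition minv_apply (A : mat2Z) (p : pt) : pt :=
  let dt := IZR (detZ A) in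
  ((IZR (m22 A) * fst p - IZR (m12 A) * snd p) / dt,
   (- IZR (m21 A) * fst p + IZR (m11 A) * snd p) / dt).

Fixpoint minv_pow (A : mat2Z) (n : nat) (p : pt) : pt :=
  match n with
  | O => p
  | S n' => minv_apply A (minv_pow A n' p)
  end.

(* Complex numbers as pairs (re, im); complex multiplication. *)
Definition cmul (z w : R * R) : R * R :=
  (fst z * fst w - snd z * snd w, fst z * snd w + snd z * fst w).

(* lam is a (complex) eigenvalue of A: there is a nonzero w in C^2 with A w = lam w. *)
Definition is_eigenvalue (A : mat2Z) (lam : R * R) : Prop :=
  exists w1 w2 : R * R,
    (w1 <> (0, 0) \/ w2 <> (0, 0)) /\
    padd (pscale (IZR (m11 A)) w1) (pscale (IZR (m12 A)) w2) = cmul lam w1 /\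
    padd (pscale (IZR (m21 A)) w1) (pscale (IZR (m22 A)) w2) = cmul lam w2.

Definition expanding (A : mat2Z) : Prop :=
  forall lam : R * R, is_eigenvalue A lam ->
    1 < sqrt (fst lam * fst lam + snd lam * snd lam).

(* Partial sums  sum_{i=1}^{n} A^{-i} d_i,  with the digit sequence indexed d 0, d 1, ...
   (d (i-1) plays the role of d_{j_i}). *)
Fixpoint partial_sum (A : mat2Z) (d : nat -> pt) (n : nat) : pt :=
  match n with
  | O => pzero
  | S n' => padd (partial_sum A d n') (minv_pow A n (d n'))
  end.

Definition self_affine_set (A : mat2Z) (D : list pt) (x : pt) : Prop :=
  exists d : nat -> pt,
    (forall i, In (d i) D) /\
    Un_cv (fun n => fst (partial_sum A d n)) (fst x) /\
    Un_cv (fun n => snd (partial_sum A d n)) (snd x).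

Definition dist2 (p q : pt) : R :=
  sqrt ((fst p - fst q) * (fst p - fst q) + (snd p - snd q) * (snd p - snd q)).

Definition open2 (U : pt -> Prop) : Prop :=
  forall p, U p -> exists eps, 0 < eps /\ forall q, dist2 p q < eps -> U q.

Definition connected2 (S : pt -> Prop) : Prop :=
  ~ exists U V : pt -> Prop,
      open2 U /\ open2 V /\
      (forall p, S p -> U p \/ V p) /\
      (exists p, S p /\ U p) /\
      (exists p, S p /\ V p) /\
      (forall p, S p -> U p -> V p -> False).

Definition lin_indep2 (u w : pt) : Prop :=
  forall a b : R, padd (pscale a u) (pscale b w) = pzero -> a = 0 /\ b = 0.

(* Main.v *)
From Stdlib Require Import Reals Lra Lia ZArith List QArith Qreals Classical ClassicalEpsilon.
Require Import Defs.
Open Scope R_scope.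

Record rmat := RM { ra : R; rb : R; rc : R; rd : R }.
Definition mv (M : rmat) (x : pt) : pt :=
  (ra M * fst x + rb M * snd x, rc M * fst x + rd M * snd x).
Fixpoint mpow (M : rmat) (n : nat) (x : pt) : pt :=
  match n with O => x | S n' => mv M (mpow M n' x) end.
Fixpoint psum (M : rmat) (d : nat -> pt) (n : nat) : pt :=
  match n with O => pzero | S n' => padd (psum M d n') (mpow M n (d n')) end.
Definition nrm (x : pt) : R := Rmax (Rabs (fst x)) (Rabs (snd x)).
Definition psub (x y : pt) : pt := (fst x - fst y, snd x - snd y).
Fixpoint rsum (f : nat -> R) (n : nat) : R :=
  match n with O => 0 | S n' => rsum f n' + f n' end.

Lemma psum_S M d n : psum M d (S n) = padd (psum M d n) (mpow M (S n) (d n)).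
Proof. reflexivity. Qed.
Lemma pt_eq (x y : pt) : fst x = fst y -> snd x = snd y -> x = y.
Proof. destruct x, y; simpl; intros; subst; reflexivity. Qed.

Lemma mv_padd M x y : mv M (padd x y) = padd (mv M x) (mv M y).
Proof. destruct x, y; unfold mv, padd; simpl; apply pt_eq; simpl; ring. Qed.
Lemma mv_psub M x y : mv M (psub x y) = psub (mv M x) (mv M y).
Proof. destruct x, y; unfold mv, psub; simpl; apply pt_eq; simpl; ring. Qed.
Lemma mpow_padd M n x y : mpow M n (padd x y) = padd (mpow M n x) (mpow M n y).
Proof. induction n; simpl; [reflexivity| rewrite IHn, mv_padd; reflexivity]. Qed.
Lemma mpow_psub M n x y : mpow M n (psub x y) = psub (mpow M n x) (mpow M n y).
Proof. induction n; simpl; [reflexivity| rewrite IHn, mv_psub; reflexivity]. Qed.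
Lemma mpow_zero M n : mpow M n pzero = pzero.
Proof. induction n; simpl; auto. rewrite IHn. unfold mv, pzero; apply pt_eq; simpl; ring. Qed.
Lemma mpow_plus M n m x : mpow M (n + m) x = mpow M n (mpow M m x).
Proof. induction n; simpl; [reflexivity| rewrite IHn; reflexivity]. Qed.
Lemma mpow_S' M n x : mpow M (S n) x = mpow M n (mv M x).
Proof. replace (S n) with (n + 1)%nat by lia. rewrite mpow_plus. reflexivity. Qed.

Lemma nrm_nonneg x : 0 <= nrm x.
Proof. unfold nrm. apply Rle_trans with (Rabs (fst x)); [apply Rabs_pos| apply Rmax_l]. Qed.
Lemma nrm_fst x : Rabs (fst x) <= nrm x.
Proof. apply Rmax_l. Qed.
Lemma nrm_snd x : Rabs (snd x) <= nrm x.
Proof. apply Rmax_r. Qed.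
Lemma nrm_le x c : Rabs (fst x) <= c -> Rabs (snd x) <= c -> nrm x <= c.
Proof. intros; apply Rmax_lub; auto. Qed.
Lemma nrm_padd x y : nrm (padd x y) <= nrm x + nrm y.
Proof.
  apply nrm_le; simpl; eapply Rle_trans; try apply Rabs_triang;
  apply Rplus_le_compat; auto using nrm_fst, nrm_snd.
Qed.
Lemma nrm_psub x y : nrm (psub x y) <= nrm x + nrm y.
Proof.
  apply nrm_le; simpl; unfold Rminus; eapply Rle_trans; try apply Rabs_triang;
  rewrite Rabs_Ropp; apply Rplus_le_compat; auto using nrm_fst, nrm_snd.
Qed.
Lemma psub_tri x y z : nrm (psub x z) <= nrm (psub x y) + nrm (psub y z).
Proof.
  replace (psub x z) with (padd (psub x y) (psub y z)).
  apply nrm_padd. destruct x, y, z; unfold psub, padd; simpl; apply pt_eq; simpl; ring.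
Qed.
Lemma psub_sym x y : nrm (psub x y) = nrm (psub y x).
Proof.
  unfold nrm, psub; simpl. rewrite (Rabs_minus_sym (fst x)), (Rabs_minus_sym (snd x)). reflexivity.
Qed.
Lemma nrm_psub_self x : nrm (psub x x) = 0.
Proof.
  unfold nrm, psub; simpl. replace (fst x - fst x) with 0 by ring. replace (snd x - snd x) with 0 by ring.
  rewrite Rabs_R0. apply Rmax_left. lra.
Qed.
Lemma nrm_zero x : (forall e, 0 < e -> nrm x <= e) -> x = pzero.
Proof.
  intros H. assert (Hn : nrm x <= 0).
  { apply Rnot_lt_le; intro Hlt. specialize (H (nrm x / 2)). lra. }
  pose proof (nrm_fst x); pose proof (nrm_snd x).
  pose proof (Rabs_pos (fst x)); pose proof (Rabs_pos (snd x)).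
  destruct x as [a b]; simpl in *. unfold pzero.
  assert (Rabs a = 0) by lra. assert (Rabs b = 0) by lra.
  assert (a = 0) by (destruct (Req_dec a 0); auto; apply Rabs_no_R0 in H6; lra). assert (b = 0) by (destruct (Req_dec b 0); auto; apply Rabs_no_R0 in H7; lra). subst; reflexivity.
Qed.

Lemma mv_bound M x :
  nrm (mv M x) <= Rmax (Rabs (ra M) + Rabs (rb M)) (Rabs (rc M) + Rabs (rd M)) * nrm x.
Proof.
  pose proof (nrm_fst x); pose proof (nrm_snd x).
  assert (Hm1 := Rmax_l (Rabs (ra M) + Rabs (rb M)) (Rabs (rc M) + Rabs (rd M))).
  assert (Hm2 := Rmax_r (Rabs (ra M) + Rabs (rb M)) (Rabs (rc M) + Rabs (rd M))).
  pose proof (nrm_nonneg x).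
  apply nrm_le; simpl; eapply Rle_trans; try apply Rabs_triang; rewrite !Rabs_mult.
  - apply Rle_trans with ((Rabs (ra M) + Rabs (rb M)) * nrm x).
    + rewrite Rmult_plus_distr_r. apply Rplus_le_compat; apply Rmult_le_compat_l; auto using Rabs_pos.
    + apply Rmult_le_compat_r; auto.
  - apply Rle_trans with ((Rabs (rc M) + Rabs (rd M)) * nrm x).
    + rewrite Rmult_plus_distr_r. apply Rplus_le_compat; apply Rmult_le_compat_l; auto using Rabs_pos.
    + apply Rmult_le_compat_r; auto.
Qed.

Definition rho : R := 17/20.

Lemma rho_pos : 0 < rho. Proof. unfold rho; lra. Qed.
Lemma rho_lt1 : rho < 1. Proof. unfold rho; lra. Qed.
Lemma pow_rho_pos n : 0 < rho ^ n. Proof. apply pow_lt, rho_pos. Qed.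

Lemma rho_pow_le1 n : rho ^ n <= 1.
Proof. induction n; simpl. lra. pose proof rho_pos; pose proof rho_lt1; pose proof (pow_rho_pos n). nra. Qed.

Section Contr.
Variable M : rmat.
Hypothesis H1 : forall x, nrm (mv M x) <= 2 * nrm x.
Hypothesis H4 : forall x, nrm (mpow M 4 x) <= /2 * nrm x.

Lemma pow_bound n x : nrm (mpow M n x) <= 2 ^ n * nrm x.
Proof. pose proof (nrm_nonneg x). induction n; simpl. lra. eapply Rle_trans; [apply H1|]. nra. Qed.

Lemma small_pow r x : (r < 4)%nat -> nrm (mpow M r x) <= 8 * nrm x.
Proof.
  intros Hr. pose proof (nrm_nonneg x).
  assert (G := fun n => pow_bound n x).
  eapply Rle_trans; [apply G|]. apply Rmult_le_compat_r; auto.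
  destruct r as [|[|[|[|]]]]; simpl; lra || lia.
Qed.

Lemma decay n x : nrm (mpow M n x) <= 14 * rho ^ n * nrm x.
Proof.
  assert (K : forall j r x, (r < 4)%nat -> nrm (mpow M (4 * j + r) x) <= 14 * rho ^ (4 * j + r) * nrm x).
  { induction j; intros r y Hr.
    - simpl. eapply Rle_trans; [apply small_pow; auto|]. pose proof (nrm_nonneg y).
      apply Rmult_le_compat_r; auto.
      destruct r as [|[|[|[|]]]]; unfold rho; simpl; lra || lia.
    - replace (4 * S j + r)%nat with ((4 * j + r) + 4)%nat by lia.
      rewrite mpow_plus. eapply Rle_trans; [apply IHj; auto|].
      rewrite (pow_add rho (4 * j + r) 4). pose proof (H4 y). pose proof (pow_rho_pos (4 * j + r)).
      assert (rho ^ 4 >= /2) by (unfold rho; simpl; lra).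
      pose proof (nrm_nonneg (mpow M 4 y)). pose proof (nrm_nonneg y).
      assert (14 * rho ^ (4 * j + r) * nrm (mpow M 4 y) <= 14 * rho ^ (4 * j + r) * (/2 * nrm y)).
      { apply Rmult_le_compat_l; lra. }
      assert (0 <= (rho ^ 4 - /2) * (rho ^ (4 * j + r) * nrm y)).
      { apply Rmult_le_pos; [lra| apply Rmult_le_pos; lra]. }
      nra. }
  replace n with (4 * (n / 4) + n mod 4)%nat by (pose proof (Nat.div_mod_eq n 4); lia).
  apply K. apply Nat.mod_upper_bound; lia.
Qed.

Lemma rsum_ext f g n : (forall i, (i < n)%nat -> f i = g i) -> rsum f n = rsum g n.
Proof. induction n; simpl; intros; auto. rewrite IHn by auto. rewrite H; auto. Qed.
Lemma rsum_le f g n : (forall i, (i < n)%nat -> f i <= g i) -> rsum f n <= rsum g n.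
Proof. induction n; simpl; intros; [lra|]. apply Rplus_le_compat; auto. Qed.
Lemma rsum_plus f n m : rsum f (n + m) = rsum f n + rsum (fun i => f (n + i)%nat) m.
Proof. induction m; simpl. rewrite Nat.add_0_r; ring. rewrite Nat.add_succ_r; simpl. rewrite IHm; ring. Qed.
Lemma rsum_nonneg f n : (forall i, 0 <= f i) -> 0 <= rsum f n.
Proof. induction n; simpl; intros; auto. lra. pose proof (H n); pose proof (IHn H); lra. Qed.

Lemma sumbound n z : rsum (fun j => nrm (mpow M j z)) n <= 30 * nrm z.
Proof.
  assert (K : forall j z, rsum (fun j => nrm (mpow M j z)) (4 * j) <= 30 * nrm z).
  { induction j; intros y.
    - simpl. pose proof (nrm_nonneg y); lra.
    - replace (4 * S j)%nat with (4 + 4 * j)%nat by lia. rewrite rsum_plus.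
      rewrite (rsum_ext (fun i => nrm (mpow M (4 + i) y)) (fun i => nrm (mpow M i (mpow M 4 y)))).
      2:{ intros i _. rewrite Nat.add_comm, mpow_plus. reflexivity. }
      pose proof (IHj (mpow M 4 y)). pose proof (H4 y).
      simpl rsum. pose proof (pow_bound 1 y). pose proof (pow_bound 2 y). pose proof (pow_bound 3 y).
      simpl in *. lra. }
  apply Rle_trans with (rsum (fun j => nrm (mpow M j z)) (4 * S n)).
  - replace (4 * S n)%nat with (n + (4 * S n - n))%nat by lia. rewrite rsum_plus.
    pose proof (rsum_nonneg (fun i => nrm (mpow M (n + i) z)) (4 * S n - n) (fun i => nrm_nonneg _)). lra.
  - apply K.
Qed.

Definition conv (d : nat -> pt) (x : pt) : Prop :=
  Un_cv (fun n => fst (psum M d n)) (fst x) /\ Un_cv (fun n => snd (psum M d n)) (snd x).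

Lemma psum_diff d B n m : (forall i, nrm (d i) <= B) ->
  nrm (psub (psum M d (n + m)) (psum M d n)) <= 14 * B * rho ^ (S n) * (20/3) * (1 - rho ^ m).
Proof.
  intros HB. induction m.
  - rewrite Nat.add_0_r. simpl pow. rewrite nrm_psub_self. lra.
  - rewrite Nat.add_succ_r. rewrite psum_S.
    replace (psub (padd (psum M d (n + m)) (mpow M (S (n + m)) (d (n + m)%nat))) (psum M d n))
      with (padd (psub (psum M d (n + m)) (psum M d n)) (mpow M (S (n + m)) (d (n + m)%nat))).
    2:{ unfold padd, psub; apply pt_eq; simpl; ring. }
    eapply Rle_trans; [apply nrm_padd|].
    pose proof (decay (S (n + m)) (d (n + m)%nat)).
    pose proof (HB (n + m)%nat).
    pose proof (pow_rho_pos (S (n + m))).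
    assert (14 * rho ^ S (n + m) * nrm (d (n + m)%nat) <= 14 * rho ^ S (n + m) * B)
      by (apply Rmult_le_compat_l; lra).
    replace (rho ^ S (n + m)) with (rho ^ S n * rho ^ m) in * by (rewrite <- pow_add; f_equal; lia).
    assert (rho ^ S m = rho * rho ^ m) by reflexivity. rewrite H5.
    pose proof (pow_rho_pos (S n)). pose proof (pow_rho_pos m).
    assert (0 <= B) by (eapply Rle_trans; [apply nrm_nonneg| apply (HB 0%nat)]).
    unfold rho in *. nra.
Qed.

Lemma psum_diff' d B n m : (forall i, nrm (d i) <= B) ->
  nrm (psub (psum M d (n + m)) (psum M d n)) <= 100 * B * rho ^ n.
Proof.
  intros HB. eapply Rle_trans; [apply psum_diff; eauto|].
  assert (0 <= B) by (eapply Rle_trans; [apply nrm_nonneg| apply (HB 0%nat)]).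
  pose proof (pow_rho_pos n). pose proof (pow_rho_pos m).
  assert (0 <= B * rho ^ n) by (apply Rmult_le_pos; lra).
  assert (0 <= B * rho ^ n * rho ^ m) by (apply Rmult_le_pos; lra).
  simpl. unfold rho in *. nra.
Qed.

Lemma rho_small e : 0 < e -> exists N, forall n, (n >= N)%nat -> rho ^ n < e.
Proof.
  intros He. destruct (pow_lt_1_zero rho) with e as [N HN].
  { rewrite Rabs_pos_eq; [apply rho_lt1| left; apply rho_pos]. } auto.
  exists N. intros n Hn. specialize (HN n Hn). rewrite Rabs_pos_eq in HN; auto.
  left; apply pow_rho_pos.
Qed.

Lemma conv_exists d B : (forall i, nrm (d i) <= B) -> exists x, conv d x.
Proof.
  intros HB.
  assert (HB0 : 0 <= B) by (eapply Rle_trans; [apply nrm_nonneg| apply (HB 0%nat)]).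
  assert (Cc : forall (pr : pt -> R), (forall y, Rabs (pr y) <= nrm y) ->
              (forall x y, pr (psub x y) = pr x - pr y) ->
              Cauchy_crit (fun n => pr (psum M d n))).
  { intros pr Hpr Hlin e He.
    destruct (rho_small (e / (2 * (100 * B + 1)))) as [N HN].
    { apply Rdiv_lt_0_compat; lra. }
    exists N. intros n m Hn Hm. unfold R_dist.
    assert (G : forall k, (k >= N)%nat -> Rabs (pr (psum M d k) - pr (psum M d N)) < e / 2).
    { intros k Hk. replace k with (N + (k - N))%nat by lia. rewrite <- Hlin.
      eapply Rle_lt_trans; [apply Hpr|]. eapply Rle_lt_trans; [apply psum_diff'; eauto|].
      specialize (HN N (le_n _)). pose proof (pow_rho_pos N).
      apply Rle_lt_trans with ((100 * B + 1) * rho ^ N). nra.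
      apply Rlt_le_trans with ((100 * B + 1) * (e / (2 * (100 * B + 1)))).
      apply Rmult_lt_compat_l; lra. right; field; lra. }
    pose proof (G n Hn); pose proof (G m Hm).
    replace (pr (psum M d n) - pr (psum M d m)) with
      ((pr (psum M d n) - pr (psum M d N)) - (pr (psum M d m) - pr (psum M d N))) by ring.
    eapply Rle_lt_trans; [apply Rabs_triang|]. rewrite Rabs_Ropp. lra. }
  destruct (R_complete _ (Cc fst nrm_fst (fun x y => eq_refl))) as [a Ha].
  destruct (R_complete _ (Cc snd nrm_snd (fun x y => eq_refl))) as [b Hb].
  exists (a, b). split; assumption.
Qed.

Lemma conv_unique d x y : conv d x -> conv d y -> x = y.
Proof.
  intros [H1x H2x] [H1y H2y]. apply pt_eq; eapply UL_sequence; eauto.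
Qed.

Lemma cv_close (u : nat -> R) l a c n : Un_cv u l -> (forall m, Rabs (u (n + m)%nat - a) <= c) ->
  Rabs (l - a) <= c.
Proof.
  intros Hu Hb. apply Rnot_lt_le. intro Hlt.
  destruct (Hu (Rabs (l - a) - c)) as [N HN]; [lra|].
  specialize (HN (n + N)%nat ltac:(lia)). specialize (Hb N). unfold R_dist in HN.
  assert (E : l - a = (l - u (n + N)%nat) + (u (n + N)%nat - a)) by ring.
  rewrite E in Hlt at 1. rewrite E in HN.
  pose proof (Rabs_triang (l - u (n + N)%nat) (u (n + N)%nat - a)).
  rewrite Rabs_minus_sym in HN. lra.
Qed.

Lemma conv_bound d B x n : (forall i, nrm (d i) <= B) -> conv d x ->
  nrm (psub x (psum M d n)) <= 100 * B * rho ^ n.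
Proof.
  intros HB [Hf Hs]. apply nrm_le; simpl.
  - apply cv_close with (u := fun n => fst (psum M d n)) (n := n); auto. intro m.
    eapply Rle_trans; [|apply (psum_diff' d B n m HB)].
    apply (nrm_fst (psub (psum M d (n + m)) (psum M d n))).
  - apply cv_close with (u := fun n => snd (psum M d n)) (n := n); auto. intro m.
    eapply Rle_trans; [|apply (psum_diff' d B n m HB)].
    apply (nrm_snd (psub (psum M d (n + m)) (psum M d n))).
Qed.

Definition shiftw (m : nat) (d : nat -> pt) : nat -> pt := fun i => d (m + i)%nat.

Lemma psum_shift d m n :
  psum M d (m + n) = padd (psum M d m) (mpow M m (psum M (shiftw m d) n)).
Proof.
  induction n.
  - rewrite Nat.add_0_r. simpl. rewrite mpow_zero. unfold padd, pzero. apply pt_eq; simpl; ring.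
  - rewrite Nat.add_succ_r, !psum_S, IHn, mpow_padd.
    unfold shiftw at 2. rewrite <- mpow_plus, <- Nat.add_succ_r.
    unfold shiftw; unfold padd; apply pt_eq; simpl; ring.
Qed.

Lemma conv_shift d B m x y : (forall i, nrm (d i) <= B) ->
  conv d x -> conv (shiftw m d) y -> x = padd (psum M d m) (mpow M m y).
Proof.
  intros HB Hx Hy.
  assert (HB0 : 0 <= B) by (eapply Rle_trans; [apply nrm_nonneg| apply (HB 0%nat)]).
  assert (Z : psub x (padd (psum M d m) (mpow M m y)) = pzero).
  { apply nrm_zero. intros e He.
    destruct (rho_small (e / (100 * B * 15 + 1))) as [N HN]. apply Rdiv_lt_0_compat; lra.
    specialize (HN N (le_n _)).
    pose proof (conv_bound d B x (m + N) HB Hx).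
    pose proof (conv_bound (shiftw m d) B y N (fun i => HB _) Hy).
    rewrite psum_shift in H.
    replace (psub x (padd (psum M d m) (mpow M m y))) with
      (padd (psub x (padd (psum M d m) (mpow M m (psum M (shiftw m d) N))))
            (mpow M m (psub (psum M (shiftw m d) N) y))).
    2:{ rewrite mpow_psub. unfold padd, psub; apply pt_eq; simpl; ring. }
    eapply Rle_trans; [apply nrm_padd|].
    pose proof (decay m (psub (psum M (shiftw m d) N) y)).
    pose proof (pow_rho_pos m). pose proof (pow_rho_pos N).
    assert (rho ^ m <= 1) by apply rho_pow_le1.
    rewrite pow_add in H.
    rewrite psub_sym in H0. assert (HX := nrm_nonneg (psub (psum M (shiftw m d) N) y)).
    set (X := nrm (psub (psum M (shiftw m d) N) y)) in *.
    assert (HH0 : rho ^ m * X <= X).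
    { rewrite <- (Rmult_1_l X) at 2. apply Rmult_le_compat_r; lra. }
    assert (HH : 14 * rho ^ m * X <= 14 * 100 * B * rho ^ N) by nra.
    assert (HH2 : 100 * B * (rho ^ m * rho ^ N) <= 100 * B * rho ^ N) by nra.
    assert (HH3 : (100 * B * 15 + 1) * rho ^ N <= e).
    { apply Rlt_le. apply Rlt_le_trans with ((100 * B * 15 + 1) * (e / (100 * B * 15 + 1))).
      apply Rmult_lt_compat_l; lra. right; field; lra. }
    lra. }
  destruct x; unfold psub, padd, pzero in *; simpl in *. injection Z; intros.
  apply pt_eq; simpl; lra.
Qed.

End Contr.

Definition valid (D : list pt) (w : nat -> pt) : Prop := forall i, In (w i) D.
Definition agree (w w' : nat -> pt) (m : nat) : Prop := forall i, (i < m)%nat -> w i = w' i.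
Definition wcons (a : pt) (s : nat -> pt) : nat -> pt :=
  fun i => match i with O => a | S j => s j end.
Definition spl (w : nat -> pt) (m : nat) (a : pt) (s : nat -> pt) : nat -> pt :=
  fun i => if (i <? m)%nat then w i else wcons a s (i - m).
Definition upd (w : nat -> pt) (m : nat) (a : pt) : nat -> pt :=
  fun i => if (i =? m)%nat then a else w i.

Lemma psum_ext M w w' n : (forall i, (i < n)%nat -> w i = w' i) -> psum M w n = psum M w' n.
Proof. induction n; intros H; simpl; auto. rewrite IHn by auto. rewrite H; auto. Qed.

Lemma conv_ext M w w' x : (forall i, w i = w' i) -> conv M w x -> conv M w' x.
Proof.
  intros H [Hf Hs]. split.
  - eapply Un_cv_ext; [|exact Hf]. intro n; simpl. rewrite (psum_ext M w w' n); auto.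
  - eapply Un_cv_ext; [|exact Hs]. intro n; simpl. rewrite (psum_ext M w w' n); auto.
Qed.

Lemma dist2_le p q : dist2 p q <= 2 * nrm (psub p q).
Proof.
  unfold dist2. set (a := fst p - fst q). set (b := snd p - snd q).
  assert (Ha : Rabs a <= nrm (psub p q)) by apply (nrm_fst (psub p q)).
  assert (Hb : Rabs b <= nrm (psub p q)) by apply (nrm_snd (psub p q)).
  apply Rle_trans with (Rabs a + Rabs b); [|lra].
  rewrite <- (sqrt_square (Rabs a + Rabs b)) by (pose proof (Rabs_pos a); pose proof (Rabs_pos b); lra).
  apply sqrt_le_1_alt.
  pose proof (Rabs_pos a); pose proof (Rabs_pos b).
  assert (a * a = Rabs a * Rabs a) by (rewrite <- Rabs_mult, Rabs_pos_eq; nra).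
  assert (b * b = Rabs b * Rabs b) by (rewrite <- Rabs_mult, Rabs_pos_eq; nra).
  nra.
Qed.

Section Conn.
Variable M : rmat.
Hypothesis H1 : forall x, nrm (mv M x) <= 2 * nrm x.
Hypothesis H4 : forall x, nrm (mpow M 4 x) <= /2 * nrm x.
Variable D : list pt.
Variable B : R.
Hypothesis HB : forall d, In d D -> nrm d <= B.
Definition TT (x : pt) : Prop := exists w, valid D w /\ conv M w x.
Hypothesis Hedge : exists c, In c D /\ forall a, In a D ->
  exists s t x, valid D s /\ valid D t /\ conv M (wcons a s) x /\ conv M (wcons c t) x.

Lemma valid_bound w : valid D w -> forall i, nrm (w i) <= B.
Proof. intros Hw i; apply HB, Hw. Qed.

Lemma valid_conv w : valid D w -> exists x, conv M w x.
Proof. intros Hw; exact (conv_exists M H1 H4 w B (valid_bound w Hw)). Qed.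

Lemma close_agree w w' m x x' : valid D w -> valid D w' -> agree w w' m ->
  conv M w x -> conv M w' x' -> nrm (psub x x') <= 200 * B * rho ^ m.
Proof.
  intros Hw Hw' Ha Hx Hx'.
  pose proof (conv_bound M H1 H4 w B x m (valid_bound w Hw) Hx).
  pose proof (conv_bound M H1 H4 w' B x' m (valid_bound w' Hw') Hx').
  rewrite (psum_ext M w w' m Ha) in H.
  eapply Rle_trans; [apply (psub_tri x (psum M w' m) x')|]. rewrite (psub_sym (psum M w' m)). lra.
Qed.

Lemma spl_valid w m a s : valid D w -> In a D -> valid D s -> valid D (spl w m a s).
Proof.
  intros Hw Ha Hs i. unfold spl. destruct (i <? m)%nat; auto.
  unfold wcons. destruct (i - m)%nat; auto.
Qed.
Lemma spl_agree w m a s : agree w (spl w m a s) m.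
Proof. intros i Hi. unfold spl. apply Nat.ltb_lt in Hi. rewrite Hi. auto. Qed.
Lemma spl_at w m a s : spl w m a s m = a.
Proof. unfold spl. rewrite Nat.ltb_irrefl, Nat.sub_diag. reflexivity. Qed.
Lemma spl_shift w m a s i : shiftw m (spl w m a s) i = wcons a s i.
Proof.
  unfold shiftw, spl. replace (m + i <? m)%nat with false.
  f_equal; lia. symmetry; apply Nat.ltb_ge; lia.
Qed.

Lemma spl_same w m a s c t y x1 x2 : valid D w -> In a D -> In c D -> valid D s -> valid D t ->
  conv M (wcons a s) y -> conv M (wcons c t) y ->
  conv M (spl w m a s) x1 -> conv M (spl w m c t) x2 -> x1 = x2.
Proof.
  intros Hw Ha Hc Hs Ht Hy1 Hy2 Hx1 Hx2.
  assert (V1 := spl_valid w m a s Hw Ha Hs). assert (V2 := spl_valid w m c t Hw Hc Ht).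
  rewrite (conv_shift M H1 H4 _ B m x1 y (valid_bound _ V1) Hx1).
  2:{ eapply conv_ext; [|exact Hy1]. intro i; rewrite spl_shift; auto. }
  rewrite (conv_shift M H1 H4 _ B m x2 y (valid_bound _ V2) Hx2).
  2:{ eapply conv_ext; [|exact Hy2]. intro i; rewrite spl_shift; auto. }
  rewrite (psum_ext M (spl w m a s) w m), (psum_ext M (spl w m c t) w m); auto;
  intros i Hi; symmetry; apply spl_agree; auto.
Qed.

Lemma agree_trans w1 w2 w3 m : agree w1 w2 m -> agree w2 w3 m -> agree w1 w3 m.
Proof. intros A B' i Hi. rewrite A, B'; auto. Qed.
Lemma agree_sym w1 w2 m : agree w1 w2 m -> agree w2 w1 m.
Proof. intros A i Hi. rewrite A; auto. Qed.
Lemma agree_le w1 w2 m n : (n <= m)%nat -> agree w1 w2 m -> agree w1 w2 n.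
Proof. intros H A i Hi. apply A; lia. Qed.

Section Split.
Variables U V : pt -> Prop.
Hypothesis HU : open2 U.
Hypothesis HV : open2 V.
Hypothesis Hcov : forall p, TT p -> U p \/ V p.
Hypothesis HpU : exists p, TT p /\ U p.
Hypothesis HpV : exists p, TT p /\ V p.
Hypothesis Hdis : forall p, TT p -> U p -> V p -> False.

Definition col (w : nat -> pt) : Prop := exists x, conv M w x /\ U x.

Lemma col_iff w x : conv M w x -> (col w <-> U x).
Proof.
  intros Hx; split.
  - intros [y [Hy Uy]]. rewrite (conv_unique M w x y Hx Hy). auto.
  - intros Ux; exists x; auto.
Qed.

Lemma B_nonneg : (exists w, valid D w) -> 0 <= B.
Proof. intros [w Hw]. eapply Rle_trans; [apply nrm_nonneg| apply (valid_bound w Hw 0%nat)]. Qed.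

Lemma loc_const w : valid D w -> exists m, forall w', valid D w' -> agree w w' m -> (col w' <-> col w).
Proof.
  intros Hw. destruct (valid_conv w Hw) as [x Hx].
  assert (Tx : TT x) by (exists w; auto).
  assert (HB0 : 0 <= B) by (apply B_nonneg; eauto).
  assert (Key : forall (W : pt -> Prop), open2 W -> W x -> exists m, forall w' x', valid D w' -> agree w w' m ->
             conv M w' x' -> W x').
  { intros W HW Wx. destruct (HW x Wx) as [eps [He Hball]].
    destruct (rho_small (eps / (400 * B + 1))) as [m Hm]. apply Rdiv_lt_0_compat; lra.
    exists m. intros w' x' Hw' Ha Hx'. apply Hball.
    eapply Rle_lt_trans; [apply dist2_le|].
    pose proof (close_agree w w' m x x' Hw Hw' Ha Hx Hx').
    specialize (Hm m (le_n _)). pose proof (pow_rho_pos m).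
    apply Rle_lt_trans with (400 * B * rho ^ m + rho ^ m). nra.
    apply Rlt_le_trans with ((400 * B + 1) * (eps / (400 * B + 1))).
    replace (400 * B * rho ^ m + rho ^ m) with ((400 * B + 1) * rho ^ m) by ring.
    apply Rmult_lt_compat_l; lra. right; field; lra. }
  destruct (Hcov x Tx) as [Ux | Vx].
  - destruct (Key U HU Ux) as [m Hm]. exists m. intros w' Hw' Ha.
    destruct (valid_conv w' Hw') as [x' Hx'].
    rewrite (col_iff w' x' Hx'), (col_iff w x Hx). split; intros _; [auto| eapply Hm; eauto].
  - destruct (Key V HV Vx) as [m Hm]. exists m. intros w' Hw' Ha.
    destruct (valid_conv w' Hw') as [x' Hx'].
    assert (Tx' : TT x') by (exists w'; auto).
    rewrite (col_iff w' x' Hx'), (col_iff w x Hx). split; intro HH.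
    + exfalso. apply (Hdis x' Tx' HH). eapply Hm; eauto.
    + exfalso. apply (Hdis x Tx HH Vx).
Qed.

Definition good (w : nat -> pt) (m N : nat) : Prop :=
  forall w1 w2, valid D w1 -> valid D w2 -> agree w w1 m -> agree w w2 m -> agree w1 w2 N ->
    (col w1 <-> col w2).

Lemma good_mono w m N N' : (N <= N')%nat -> good w m N -> good w m N'.
Proof. intros Hle G w1 w2 V1 V2 A1 A2 A12. apply G; auto. eapply agree_le; eauto. Qed.

Lemma fin_max (P : pt -> nat -> Prop) (L : list pt) :
  (forall d n n', (n <= n')%nat -> P d n -> P d n') ->
  (forall d, In d L -> exists n, P d n) -> exists N, forall d, In d L -> P d N.
Proof.
  intros Hm. induction L as [|a L IH]; intros H.
  - exists O. intros d [].
  - destruct (H a (or_introl eq_refl)) as [na Ha].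
    destruct IH as [N HN]. { intros d Hd; apply H; right; auto. }
    exists (Nat.max na N). intros d [<-|Hd].
    + eapply Hm; [|exact Ha]; lia.
    + eapply Hm; [|apply HN; auto]; lia.
Qed.

Lemma upd_valid w m a : valid D w -> In a D -> valid D (upd w m a).
Proof. intros Hw Ha i; unfold upd; destruct (i =? m)%nat; auto. Qed.

Lemma bad_step w m : valid D w -> (forall N, ~ good w m N) ->
  exists a, In a D /\ forall N, ~ good (upd w m a) (S m) N.
Proof.
  intros Hw Hbad. apply NNPP. intro Hno.
  assert (Hall : forall a, In a D -> exists N, good (upd w m a) (S m) N).
  { intros a Ha. apply NNPP. intro Hn. apply Hno. exists a. split; auto.
    intros N G. apply Hn. exists N; auto. }
  destruct (fin_max (fun a N => good (upd w m a) (S m) N) D) as [N HN].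
  { intros d n n' Hle G. eapply good_mono; eauto. } exact Hall.
  apply (Hbad (Nat.max N (S m))).
  intros w1 w2 V1 V2 A1 A2 A12.
  assert (Hin : In (w1 m) D) by apply V1.
  apply (HN (w1 m) Hin); auto.
  - intros i Hi. unfold upd. destruct (Nat.eqb_spec i m). subst; auto. apply A1; lia.
  - intros i Hi. unfold upd. destruct (Nat.eqb_spec i m). subst. apply A12; lia. apply A2; lia.
  - eapply agree_le; [|exact A12]; lia.
Qed.

Lemma unif : exists N, forall w w', valid D w -> valid D w' -> agree w w' N -> (col w <-> col w').
Proof.
  destruct HpU as [p0 [[w0 [Hw0 _]] _]].
  apply NNPP. intro Hno.
  assert (Hroot : forall N, ~ good w0 O N).
  { intros N G. apply Hno. exists N. intros w w' Hw Hw' A. apply G; auto; intros i Hi; lia. }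
  assert (Hch : forall w m, exists a, In a D /\ (valid D w -> (forall N, ~ good w m N) ->
                                         forall N, ~ good (upd w m a) (S m) N)).
  { intros w m. destruct (classic (valid D w /\ forall N, ~ good w m N)) as [[Hv Hb]|Hn].
    - destruct (bad_step w m Hv Hb) as [a [Ha Hg]]. exists a; auto.
    - exists (w0 O). split; [apply Hw0|]. intros Hv Hb. exfalso; apply Hn; auto. }
  set (ch := fun w m => proj1_sig (constructive_indefinite_description _ (Hch w m))).
  assert (Hchs : forall w m, In (ch w m) D /\ (valid D w -> (forall N, ~ good w m N) ->
                                         forall N, ~ good (upd w m (ch w m)) (S m) N)).
  { intros w m. exact (proj2_sig (constructive_indefinite_description _ (Hch w m))). }
  set (b := fix b (m : nat) : nat -> pt := match m with O => w0 | S m' => upd (b m') m' (ch (b m') m') end).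
  assert (bv : forall m, valid D (b m)).
  { induction m; simpl; auto. apply upd_valid; auto. apply Hchs. }
  assert (bb : forall m N, ~ good (b m) m N).
  { induction m; simpl; auto. apply Hchs; auto. }
  set (beta := fun i => b (S i) i).
  assert (bstab : forall i j, (i < j)%nat -> b j i = b (S i) i).
  { intros i j Hij. induction j. lia.
    destruct (Nat.eq_dec i j). subst; auto.
    simpl. unfold upd. destruct (Nat.eqb_spec i j). lia. apply IHj; lia. }
  assert (bagree : forall m, agree beta (b m) m).
  { intros m i Hi. unfold beta. symmetry; apply bstab; auto. }
  assert (betav : valid D beta). { intro i; apply bv. }
  destruct (loc_const beta betav) as [m0 Hm0].
  apply (bb m0 O). intros w1 w2 V1 V2 A1 A2 _.
  rewrite (Hm0 w1 V1), (Hm0 w2 V2); [tauto| |];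
  eapply agree_trans; [apply bagree| auto | apply bagree | auto].
Qed.

Lemma down : forall N, (forall w w', valid D w -> valid D w' -> agree w w' N -> (col w <-> col w')) ->
  forall j, (j <= N)%nat -> forall w w', valid D w -> valid D w' -> agree w w' (N - j) -> (col w <-> col w').
Proof.
  intros N HN j. induction j; intros Hj w w' Hw Hw' A.
  - rewrite Nat.sub_0_r in A; auto.
  - set (m := (N - S j)%nat) in *.
    assert (IH : forall w w', valid D w -> valid D w' -> agree w w' (S m) -> (col w <-> col w')).
    { intros u u' Hu Hu' Au. apply IHj; auto. lia. replace (N - j)%nat with (S m) by lia. auto. }
    destruct Hedge as [c [Hc Hed]].
    destruct (Hed (w m) (Hw m)) as [s1 [t1 [y1 [Vs1 [Vt1 [Y1 Y1']]]]]].
    destruct (Hed (w' m) (Hw' m)) as [s2 [t2 [y2 [Vs2 [Vt2 [Y2 Y2']]]]]].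
    set (u1 := spl w m (w m) s1). set (u2 := spl w m c t1).
    set (u3 := spl w m c t2). set (u4 := spl w m (w' m) s2).
    assert (Vu1 : valid D u1) by (apply spl_valid; auto).
    assert (Vu2 : valid D u2) by (apply spl_valid; auto).
    assert (Vu3 : valid D u3) by (apply spl_valid; auto).
    assert (Vu4 : valid D u4) by (apply spl_valid; auto).
    destruct (valid_conv u1 Vu1) as [x1 X1]. destruct (valid_conv u2 Vu2) as [x2 X2].
    destruct (valid_conv u3 Vu3) as [x3 X3]. destruct (valid_conv u4 Vu4) as [x4 X4].
    assert (Agm : forall a s, agree w (spl w m a s) (S m) -> True) by auto.
    assert (AS : forall a s, agree (spl w m a s) (spl w m a s) (S m)) by (intros a s i _; auto).
    assert (Asp : forall a s a' s', a = a' -> agree (spl w m a s) (spl w m a' s') (S m)).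
    { intros a s a' s' Ea i Hi. destruct (Nat.eq_dec i m).
      - subst. rewrite !spl_at. auto.
      - rewrite <- !spl_agree by lia. auto. }
    assert (E1 : col w <-> col u1).
    { apply IH; auto. intros i Hi. destruct (Nat.eq_dec i m). subst; unfold u1; rewrite spl_at; auto.
      apply spl_agree; lia. }
    assert (E2 : col u1 <-> col u2).
    { rewrite (col_iff u1 x1 X1), (col_iff u2 x2 X2).
      rewrite (spl_same w m (w m) s1 c t1 y1 x1 x2); auto; tauto. }
    assert (E3 : col u2 <-> col u3) by (apply IH; auto; apply Asp; auto).
    assert (E4 : col u3 <-> col u4).
    { rewrite (col_iff u3 x3 X3), (col_iff u4 x4 X4).
      rewrite (spl_same w m (w' m) s2 c t2 y2 x4 x3); auto; tauto. }
    assert (E5 : col u4 <-> col w').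
    { apply IH; auto. intros i Hi. destruct (Nat.eq_dec i m). subst; unfold u4; rewrite spl_at; auto.
      unfold u4; rewrite <- spl_agree by lia. apply A; lia. }
    tauto.
Qed.

Lemma split_false : False.
Proof.
  destruct unif as [N HN].
  destruct HpU as [p [[w [Hw Hx]] Up]].
  destruct HpV as [q [[w' [Hw' Hx']] Vq]].
  assert (E := down N HN N (le_n _) w w' Hw Hw' ltac:(intros i Hi; lia)).
  rewrite (col_iff w p Hx), (col_iff w' q Hx') in E.
  apply (Hdis q); [exists w'; auto| apply E; auto| auto].
Qed.
End Split.

Theorem TT_connected : connected2 TT.
Proof.
  intros [U [V [HU [HV [Hc [HpU [HpV Hd]]]]]]].
  exact (split_false U V HU HV Hc HpU HpV Hd).
Qed.
End Conn.

Definition Mpq (p q : Z) : rmat := RM (- IZR p / IZR q) 1 (- 1 / IZR q) 0.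
Definition Cz (p q : Z) (z : Z * Z) : Z * Z := ((- q * snd z)%Z, (fst z - p * snd z)%Z).
Definition zr (z : Z * Z) : pt := (IZR (fst z), IZR (snd z)).
Definition Dz (k : Z) : list (Z * Z) := (0%Z, 0%Z) :: (1%Z, 0%Z) :: (0%Z, k) :: nil.
Definition DR (k : Z) : list pt := map zr (Dz k).

Lemma mv_Cz p q z : q <> 0%Z -> mv (Mpq p q) (zr (Cz p q z)) = zr z.
Proof.
  intros hq. assert (IZR q <> 0) by (apply not_0_IZR; auto).
  unfold mv, Mpq, Cz, zr; simpl. apply pt_eq; simpl; rewrite ?minus_IZR, ?mult_IZR, ?opp_IZR; field; auto.
Qed.

Definition zeqb (a b : Z * Z) : bool := (Z.eqb (fst a) (fst b) && Z.eqb (snd a) (snd b))%bool.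
Lemma zeqb_eq a b : zeqb a b = true -> a = b.
Proof. destruct a, b; unfold zeqb; simpl; intros H. apply andb_prop in H as [H1 H2].
  apply Z.eqb_eq in H1; apply Z.eqb_eq in H2; subst; auto. Qed.

Fixpoint lookup (L : list ((Z * Z) * (nat * nat))) (z : Z * Z) : option (nat * nat) :=
  match L with nil => None | (z', ij) :: L' => if zeqb z z' then Some ij else lookup L' z end.

Definition zsub (a b : Z * Z) : Z * Z := ((fst a - fst b)%Z, (snd a - snd b)%Z).
Definition nextz (p q k : Z) (L : list ((Z * Z) * (nat * nat))) (z : Z * Z) : Z * Z :=
  match lookup L z with
  | Some (i, j) => zsub (Cz p q z) (zsub (nth i (Dz k) (0%Z,0%Z)) (nth j (Dz k) (0%Z,0%Z)))
  | None => z end.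
Definition isSome {A} (o : option A) : bool := match o with Some _ => true | None => false end.
Definition check_auto (p q k : Z) (L : list ((Z * Z) * (nat * nat))) (z0 : Z * Z) : bool :=
  (isSome (lookup L z0) &&
   forallb (fun e => let '(z, (i, j)) := e in
     ((i <? 3)%nat && (j <? 3)%nat && isSome (lookup L (nextz p q k L z)))%bool) L)%bool.
Definition zbound (L : list ((Z * Z) * (nat * nat))) : Z :=
  fold_right (fun e acc => Z.max (Z.max (Z.abs (fst (fst e))) (Z.abs (snd (fst e)))) acc) 0%Z L.

Lemma lookup_in L z ij : lookup L z = Some ij -> In (z, ij) L.
Proof.
  induction L as [|[z' ij'] L IH]; simpl; intros H; [discriminate|].
  destruct (zeqb z z') eqn:E.
  - apply zeqb_eq in E. injection H; intros; subst. left; reflexivity.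
  - right; auto.
Qed.

Lemma zbound_ok L z ij : In (z, ij) L -> nrm (zr z) <= IZR (zbound L).
Proof.
  induction L as [|e L IH]; simpl; intros H; [destruct H|].
  destruct H as [H|H].
  - subst e. unfold zr, nrm; simpl. apply Rmax_lub; rewrite <- abs_IZR; apply IZR_le; lia.
  - eapply Rle_trans; [apply IH; auto|]. apply IZR_le; lia.
Qed.

Section Auto.
Variables p q k : Z.
Hypothesis hq : q <> 0%Z.
Let M := Mpq p q.
Hypothesis H1 : forall x, nrm (mv M x) <= 2 * nrm x.
Hypothesis H4 : forall x, nrm (mpow M 4 x) <= /2 * nrm x.
Variable L : list ((Z * Z) * (nat * nat)).
Variable z0 : Z * Z.
Hypothesis Hck : check_auto p q k L z0 = true.

Definition st (n : nat) : Z * Z := Nat.iter n (nextz p q k L) z0.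
Definition ijof (z : Z * Z) : nat * nat := match lookup L z with Some ij => ij | None => (0%nat, 0%nat) end.
Definition sw (n : nat) : pt := zr (nth (fst (ijof (st n))) (Dz k) (0%Z,0%Z)).
Definition tw (n : nat) : pt := zr (nth (snd (ijof (st n))) (Dz k) (0%Z,0%Z)).

Lemma st_ok n : exists ij, lookup L (st n) = Some ij /\ (fst ij < 3)%nat /\ (snd ij < 3)%nat.
Proof.
  unfold check_auto in Hck. apply andb_prop in Hck as [H0 Hall].
  rewrite forallb_forall in Hall.
  assert (G : forall z, isSome (lookup L z) = true ->
     exists ij, lookup L z = Some ij /\ (fst ij < 3)%nat /\ (snd ij < 3)%nat /\
                isSome (lookup L (nextz p q k L z)) = true).
  { intros z Hz. destruct (lookup L z) as [[i j]|] eqn:E; [|discriminate].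
    specialize (Hall _ (lookup_in L z (i, j) E)). simpl in Hall.
    apply andb_prop in Hall as [Hij Hn]. apply andb_prop in Hij as [Hi Hj].
    apply Nat.ltb_lt in Hi; apply Nat.ltb_lt in Hj. exists (i, j); auto. }
  assert (S : forall n, isSome (lookup L (st n)) = true).
  { intro m; induction m as [|m IH]; [exact H0|]. destruct (G _ IH) as [ij [_ [_ [_ Hn]]]]. exact Hn. }
  destruct (G _ (S n)) as [ij [E [Hi [Hj _]]]]. exists ij; auto.
Qed.

Lemma Dz_in i : (i < 3)%nat -> In (zr (nth i (Dz k) (0%Z,0%Z))) (DR k).
Proof. intros Hi. unfold DR. apply in_map. apply nth_In. simpl; lia. Qed.

Lemma sw_valid : valid (DR k) sw.
Proof. intro n. destruct (st_ok n) as [ij [E [Hi Hj]]]. unfold sw, ijof. rewrite E. apply Dz_in; auto. Qed.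
Lemma tw_valid : valid (DR k) tw.
Proof. intro n. destruct (st_ok n) as [ij [E [Hi Hj]]]. unfold tw, ijof. rewrite E. apply Dz_in; auto. Qed.

Lemma zr_sub a b : zr (zsub a b) = psub (zr a) (zr b).
Proof. unfold zr, zsub, psub; simpl; rewrite !minus_IZR; auto. Qed.

Lemma inv_eq n : psub (psum M sw n) (psum M tw n) = psub (zr z0) (mpow M n (zr (st n))).
Proof.
  induction n.
  - simpl. unfold psub, pzero; apply pt_eq; simpl; ring.
  - rewrite !psum_S.
    assert (E : zr (st (S n)) = psub (zr (Cz p q (st n))) (psub (sw n) (tw n))).
    { destruct (st_ok n) as [[i j] [E _]]. unfold sw, tw, ijof. rewrite E. simpl.
      unfold nextz. rewrite E. rewrite !zr_sub. reflexivity. }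
    assert (Hc : mpow M (S n) (zr (Cz p q (st n))) = mpow M n (zr (st n))).
    { rewrite mpow_S'. unfold M. rewrite (mv_Cz p q (st n) hq). reflexivity. }
    rewrite E, mpow_psub, Hc, mpow_psub.
    unfold psub, padd in *. apply pt_eq; simpl;
    injection IHn; intros; simpl in *; lra.
Qed.

Lemma auto_conv : exists x y, conv M sw x /\ conv M tw y /\ psub x y = zr z0.
Proof.
  set (B := 1 + Rabs (IZR k)).
  assert (HBd : forall d, In d (DR k) -> nrm d <= B).
  { intros d Hd. unfold DR, Dz in Hd. simpl in Hd. unfold B, zr, nrm in *.
    pose proof (Rabs_pos (IZR k)).
    destruct Hd as [<-|[<-|[<-|[]]]]; simpl; rewrite ?Rabs_R0, ?Rabs_R1; apply Rmax_lub; lra. }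
  destruct (valid_conv M H1 H4 (DR k) B HBd sw sw_valid) as [x Hx].
  destruct (valid_conv M H1 H4 (DR k) B HBd tw tw_valid) as [y Hy].
  exists x, y. split; auto. split; auto.
  assert (Z : psub (psub x y) (zr z0) = pzero).
  { apply nrm_zero. intros e He.
    assert (HB0 : 0 <= B) by (unfold B; pose proof (Rabs_pos (IZR k)); lra).
    set (Bz := IZR (zbound L)).
    assert (HBz : forall n, nrm (zr (st n)) <= Bz).
    { intro n. destruct (st_ok n) as [ij [E _]]. eapply zbound_ok, lookup_in; eauto. }
    assert (HBz0 : 0 <= Bz) by (eapply Rle_trans; [apply nrm_nonneg| apply (HBz O)]).
    destruct (rho_small (e / (200 * B + 14 * Bz + 1))) as [n Hn]. apply Rdiv_lt_0_compat; lra.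
    specialize (Hn n (le_n _)).
    pose proof (conv_bound M H1 H4 sw B x n (valid_bound (DR k) B HBd sw sw_valid) Hx).
    pose proof (conv_bound M H1 H4 tw B y n (valid_bound (DR k) B HBd tw tw_valid) Hy).
    pose proof (decay M H1 H4 n (zr (st n))). pose proof (HBz n). pose proof (pow_rho_pos n).
    replace (psub (psub x y) (zr z0)) with
      (padd (psub (psub x (psum M sw n)) (psub y (psum M tw n)))
            (psub (psub (psum M sw n) (psum M tw n)) (zr z0))).
    2:{ unfold psub, padd; apply pt_eq; simpl; ring. }
    rewrite inv_eq. eapply Rle_trans; [apply nrm_padd|].
    eapply Rle_trans; [apply Rplus_le_compat; [apply nrm_psub| right; reflexivity]|].
    replace (psub (psub (zr z0) (mpow M n (zr (st n)))) (zr z0)) with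
       (psub pzero (mpow M n (zr (st n)))) by (unfold psub, pzero; apply pt_eq; simpl; ring).
    eapply Rle_trans; [apply Rplus_le_compat_l; apply nrm_psub|].
    unfold pzero at 1. unfold nrm at 3; simpl. rewrite Rabs_R0, Rmax_left by lra.
    assert (14 * rho ^ n * nrm (zr (st n)) <= 14 * rho ^ n * Bz) by (apply Rmult_le_compat_l; lra).
    assert ((200 * B + 14 * Bz + 1) * rho ^ n <= e).
    { apply Rlt_le. apply Rlt_le_trans with ((200 * B + 14 * Bz + 1) * (e / (200 * B + 14 * Bz + 1))).
      apply Rmult_lt_compat_l; lra. right; field; lra. }
    nra. }
  unfold psub, pzero in *. apply pt_eq; injection Z; simpl; intros; lra.
Qed.
End Auto.

Lemma edge_of (M : rmat) (H1 : forall x, nrm (mv M x) <= 2 * nrm x)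
  (H4 : forall x, nrm (mpow M 4 x) <= /2 * nrm x) D B (HBd : forall d, In d D -> nrm d <= B)
  a b s t x y : In a D -> In b D -> valid D s -> valid D t -> conv M s x -> conv M t y ->
  psub x y = psub b a -> exists z, conv M (wcons a s) z /\ conv M (wcons b t) z.
Proof.
  intros Ha Hb Hs Ht Hx Hy E.
  assert (Vs : valid D (wcons a s)) by (intros [|i]; simpl; auto).
  assert (Vt : valid D (wcons b t)) by (intros [|i]; simpl; auto).
  destruct (valid_conv M H1 H4 D B HBd _ Vs) as [z1 Z1].
  destruct (valid_conv M H1 H4 D B HBd _ Vt) as [z2 Z2].
  assert (Ez1 := conv_shift M H1 H4 _ B 1 z1 x (valid_bound D B HBd _ Vs) Z1
     ltac:(eapply conv_ext; [|exact Hx]; intro; reflexivity)).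
  assert (Ez2 := conv_shift M H1 H4 _ B 1 z2 y (valid_bound D B HBd _ Vt) Z2
     ltac:(eapply conv_ext; [|exact Hy]; intro; reflexivity)).
  exists z1. split; auto.
  replace z1 with z2; auto. rewrite Ez1, Ez2.
  simpl. unfold mv, padd, pzero, psub in *. injection E; intros. apply pt_eq; simpl; nra.
Qed.

Definition max3 (a b c : R) := Rmax a (Rmax b c).
Definition min3 (a b c : R) := Rmin a (Rmin b c).
Definition e1 : pt := (1, 0).

Lemma Rabs_le_inv' a b : Rabs a <= b -> -b <= a <= b.
Proof. unfold Rabs; destruct (Rcase_abs a); lra. Qed.
Lemma Rabs_lt_between' a b : Rabs a < b -> -b < a < b.
Proof. unfold Rabs; destruct (Rcase_abs a); lra. Qed.
Lemma rsum_lin f g t n : rsum (fun i => f i + t * g i) n = rsum f n + t * rsum g n.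
Proof. induction n; simpl; [ring| rewrite IHn; ring]. Qed.
Lemma rsum_le' f g n : (forall i, (i < n)%nat -> f i <= g i) -> rsum f n <= rsum g n.
Proof. induction n; simpl; intros; [lra|]. apply Rplus_le_compat; auto. Qed.
Lemma rsum_plus' f n m : rsum f (n + m) = rsum f n + rsum (fun i => f (n + i)%nat) m.
Proof. induction m; simpl. rewrite Nat.add_0_r; ring. rewrite Nat.add_succ_r; simpl. rewrite IHm; ring. Qed.

Lemma dist2_fst p q : Rabs (fst p - fst q) <= dist2 p q.
Proof.
  unfold dist2. rewrite <- sqrt_Rsqr_abs. apply sqrt_le_1_alt. unfold Rsqr.
  pose proof (Rle_0_sqr (snd p - snd q)). unfold Rsqr in H. lra.
Qed.
Lemma dist2_snd p q : Rabs (snd p - snd q) <= dist2 p q.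
Proof.
  unfold dist2. rewrite <- sqrt_Rsqr_abs. apply sqrt_le_1_alt. unfold Rsqr.
  pose proof (Rle_0_sqr (fst p - fst q)). unfold Rsqr in H. lra.
Qed.

Lemma mv_pscale M r x : mv M (pscale r x) = pscale r (mv M x).
Proof. unfold mv, pscale; apply pt_eq; simpl; ring. Qed.
Lemma mpow_pscale M n r x : mpow M n (pscale r x) = pscale r (mpow M n x).
Proof. induction n; simpl; auto. rewrite IHn, mv_pscale; auto. Qed.

Section Sep.
Variable M : rmat.
Hypothesis H1 : forall x, nrm (mv M x) <= 2 * nrm x.
Hypothesis H4 : forall x, nrm (mpow M 4 x) <= /2 * nrm x.
Variable f : pt.
Variable K : R.
Hypothesis HK : 2 <= K.
Variables l1 l2 : R.
Variable N : nat.
Hypothesis HN : (1 <= N)%nat.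

Definition Lf (x : pt) : R := l1 * fst x + l2 * snd x.
Definition cL : R := Rabs l1 + Rabs l2.
Definition Dsep : list pt := pzero :: e1 :: pscale K f :: nil.
Definition al (i : nat) : R := Lf (mpow M (S i) e1).
Definition be (i : nat) : R := Lf (mpow M (S i) f).
Definition tA : R := cL * 30 * (nrm (mpow M (S N) e1) + 2 * nrm (mpow M (S N) f)).
Definition tB : R := cL * 30 * nrm (mpow M (S N) f).
Definition UB0 : R := Rmax 0 (al 0) + rsum (fun i => max3 0 (al (S i)) (2 * be (S i))) (N - 1) + tA.
Definition UB1 : R := rsum (fun i => Rmax (be (S i)) 0) (N - 1) + tB.
Definition LB0 : R := 2 * be 0 + rsum (fun i => min3 0 (al (S i)) (2 * be (S i))) (N - 1) - tA.
Definition LB1 : R := be 0 + rsum (fun i => Rmin (be (S i)) 0) (N - 1) - tB.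
Hypothesis Hgap0 : UB0 < LB0.
Hypothesis Hgap1 : UB1 <= LB1.

Let t := K - 2.
Definition tm (w : nat -> pt) (i : nat) : R := Lf (mpow M (S i) (w i)).

Lemma Lf_padd x y : Lf (padd x y) = Lf x + Lf y.
Proof. unfold Lf, padd; simpl; ring. Qed.
Lemma Lf_psum w n : Lf (psum M w n) = rsum (tm w) n.
Proof. induction n; simpl. unfold Lf, pzero; simpl; ring. rewrite Lf_padd, IHn. reflexivity. Qed.
Lemma Lf_bound z : Rabs (Lf z) <= cL * nrm z.
Proof.
  unfold Lf, cL. eapply Rle_trans; [apply Rabs_triang|]. rewrite !Rabs_mult.
  pose proof (nrm_fst z); pose proof (nrm_snd z). pose proof (Rabs_pos l1); pose proof (Rabs_pos l2).
  nra.
Qed.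
Lemma Lf_scale r z : Lf (pscale r z) = r * Lf z.
Proof. unfold Lf, pscale; simpl; ring. Qed.

Lemma tm_cases w i : In (w i) Dsep -> tm w i = 0 \/ tm w i = al i \/ tm w i = K * be i.
Proof.
  intros H. unfold tm, al, be. destruct H as [E|[E|[E|[]]]]; rewrite <- E.
  - left. rewrite mpow_zero. unfold Lf, pzero; simpl; ring.
  - right; left; auto.
  - right; right. rewrite mpow_pscale, Lf_scale; auto.
Qed.

Lemma t_nonneg : 0 <= t. Proof. unfold t; lra. Qed.

Lemma tm_upper w i : In (w i) Dsep -> tm w i <= max3 0 (al i) (2 * be i) + t * Rmax (be i) 0.
Proof.
  intros H. pose proof t_nonneg. unfold max3.
  pose proof (Rmax_l 0 (Rmax (al i) (2 * be i))). pose proof (Rmax_r 0 (Rmax (al i) (2 * be i))).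
  pose proof (Rmax_l (al i) (2 * be i)). pose proof (Rmax_r (al i) (2 * be i)).
  pose proof (Rmax_l (be i) 0). pose proof (Rmax_r (be i) 0).
  assert (0 <= t * Rmax (be i) 0) by (apply Rmult_le_pos; lra).
  assert (t * be i <= t * Rmax (be i) 0) by (apply Rmult_le_compat_l; lra).
  destruct (tm_cases w i H) as [E|[E|E]]; rewrite E; unfold t in *; nra.
Qed.

Lemma tm_lower w i : In (w i) Dsep -> min3 0 (al i) (2 * be i) + t * Rmin (be i) 0 <= tm w i.
Proof.
  intros H. pose proof t_nonneg. unfold min3.
  pose proof (Rmin_l 0 (Rmin (al i) (2 * be i))). pose proof (Rmin_r 0 (Rmin (al i) (2 * be i))).
  pose proof (Rmin_l (al i) (2 * be i)). pose proof (Rmin_r (al i) (2 * be i)).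
  pose proof (Rmin_l (be i) 0). pose proof (Rmin_r (be i) 0).
  assert (t * Rmin (be i) 0 <= 0) by nra.
  assert (t * Rmin (be i) 0 <= t * be i) by (apply Rmult_le_compat_l; lra).
  destruct (tm_cases w i H) as [E|[E|E]]; rewrite E; unfold t in *; nra.
Qed.

Lemma tm_tail w i : In (w i) Dsep ->
  Rabs (tm w i) <= cL * nrm (mpow M (S i) e1) + 2 * (cL * nrm (mpow M (S i) f)) + t * (cL * nrm (mpow M (S i) f)).
Proof.
  intros H. pose proof t_nonneg.
  pose proof (Lf_bound (mpow M (S i) e1)). pose proof (Lf_bound (mpow M (S i) f)).
  pose proof (Rabs_pos (Lf (mpow M (S i) e1))). pose proof (Rabs_pos (Lf (mpow M (S i) f))).
  assert (t * Rabs (be i) <= t * (cL * nrm (mpow M (S i) f))) by (apply Rmult_le_compat_l; auto).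
  assert (0 <= t * Rabs (be i)) by (apply Rmult_le_pos; auto; apply Rabs_pos).
  unfold al, be in *.
  destruct (tm_cases w i H) as [E|[E|E]]; rewrite E.
  - rewrite Rabs_R0. lra.
  - unfold al. lra.
  - unfold be. rewrite Rabs_mult, (Rabs_pos_eq K) by lra.
    replace K with (2 + t) by (unfold t; ring). lra.
Qed.

Lemma rsum_lin3 (g1 g2 : nat -> R) a b n :
  rsum (fun j => a * g1 j + b * g2 j) n = a * rsum g1 n + b * rsum g2 n.
Proof. induction n; simpl; [ring| rewrite IHn; ring]. Qed.

Lemma tail_sum w m : valid Dsep w ->
  Rabs (rsum (fun j => tm w (N + j)%nat) m) <= tA + t * tB.
Proof.
  intros Hw. pose proof t_nonneg.
  assert (cL0 : 0 <= cL) by (unfold cL; pose proof (Rabs_pos l1); pose proof (Rabs_pos l2); lra).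
  set (ge := fun j => nrm (mpow M j (mpow M (S N) e1))).
  set (gf := fun j => nrm (mpow M j (mpow M (S N) f))).
  assert (Habs : forall g n, Rabs (rsum g n) <= rsum (fun j => Rabs (g j)) n).
  { intros g n. induction n; simpl. rewrite Rabs_R0; lra.
    eapply Rle_trans; [apply Rabs_triang|]. lra. }
  eapply Rle_trans; [apply Habs|].
  apply Rle_trans with (rsum (fun j => cL * ge j + (2 * cL + t * cL) * gf j) m).
  - apply rsum_le'. intros j _. eapply Rle_trans; [apply tm_tail; apply Hw|].
    unfold ge, gf. rewrite <- !mpow_plus. replace (j + S N)%nat with (S (N + j)) by lia. lra.
  - rewrite rsum_lin3. unfold tA, tB.
    pose proof (sumbound M H1 H4 m (mpow M (S N) e1)). pose proof (sumbound M H1 H4 m (mpow M (S N) f)).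
    fold ge in H0. fold gf in H2.
    assert (cL * rsum ge m <= cL * (30 * nrm (mpow M (S N) e1))) by (apply Rmult_le_compat_l; auto).
    assert ((2 * cL + t * cL) * rsum gf m <= (2 * cL + t * cL) * (30 * nrm (mpow M (S N) f))).
    { apply Rmult_le_compat_l; auto. pose proof (Rmult_le_pos t cL H cL0). lra. }
    lra.
Qed.

Lemma split_sum w n : (N <= n)%nat ->
  rsum (tm w) n = tm w 0 + rsum (fun i => tm w (S i)) (N - 1) + rsum (fun j => tm w (N + j)%nat) (n - N).
Proof.
  intros Hn. replace n with (N + (n - N))%nat at 1 by lia. rewrite rsum_plus'.
  replace N with (1 + (N - 1))%nat at 1 by lia. rewrite rsum_plus'. simpl. ring.
Qed.

Lemma upper_sum w n : valid Dsep w -> (w 0%nat = pzero \/ w 0%nat = e1) -> (N <= n)%nat ->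
  rsum (tm w) n <= UB0 + t * UB1.
Proof.
  intros Hw H0 Hn. rewrite split_sum by auto.
  assert (Hh : tm w 0 <= Rmax 0 (al 0)).
  { unfold tm, al. destruct H0 as [E|E]; rewrite E. rewrite mpow_zero. unfold Lf, pzero; simpl.
    replace (l1 * 0 + l2 * 0) with 0 by ring. apply Rmax_l. apply Rmax_r. }
  assert (Hm : rsum (fun i => tm w (S i)) (N - 1) <=
     rsum (fun i => max3 0 (al (S i)) (2 * be (S i))) (N - 1) + t * rsum (fun i => Rmax (be (S i)) 0) (N - 1)).
  { rewrite <- rsum_lin. apply rsum_le'. intros i _. apply tm_upper. apply Hw. }
  pose proof (tail_sum w (n - N) Hw). apply Rabs_le_inv' in H.
  unfold UB0, UB1. lra.
Qed.

Lemma lower_sum w n : valid Dsep w -> w 0%nat = pscale K f -> (N <= n)%nat ->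
  LB0 + t * LB1 <= rsum (tm w) n.
Proof.
  intros Hw H0 Hn. rewrite split_sum by auto.
  assert (Hh : tm w 0 = 2 * be 0 + t * be 0).
  { unfold tm, be. rewrite H0, mpow_pscale, Lf_scale. unfold t; ring. }
  assert (Hm : rsum (fun i => min3 0 (al (S i)) (2 * be (S i))) (N - 1) + t * rsum (fun i => Rmin (be (S i)) 0) (N - 1)
     <= rsum (fun i => tm w (S i)) (N - 1)).
  { rewrite <- rsum_lin. apply rsum_le'. intros i _. apply tm_lower. apply Hw. }
  pose proof (tail_sum w (n - N) Hw). apply Rabs_le_inv' in H.
  unfold LB0, LB1. lra.
Qed.

Lemma cv_Lf w x : conv M w x -> Un_cv (fun n => Lf (psum M w n)) (Lf x).
Proof.
  intros [Hf Hs]. unfold Lf.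
  assert (Hc : forall c, Un_cv (fun _ : nat => c) c).
  { intros c e He. exists O. intros. unfold R_dist. rewrite Rminus_diag, Rabs_R0. auto. }
  apply CV_plus; apply CV_mult; auto.
Qed.

Lemma cv_le_ev (u : nat -> R) l c N0 : Un_cv u l -> (forall n, (N0 <= n)%nat -> u n <= c) -> l <= c.
Proof.
  intros Hu Hb. apply Rnot_lt_le. intro Hlt.
  destruct (Hu (l - c)) as [N1 HN1]; [lra|].
  specialize (HN1 (N0 + N1)%nat ltac:(lia)). specialize (Hb (N0 + N1)%nat ltac:(lia)).
  unfold R_dist in HN1. apply Rabs_lt_between' in HN1. lra.
Qed.
Lemma cv_ge_ev (u : nat -> R) l c N0 : Un_cv u l -> (forall n, (N0 <= n)%nat -> c <= u n) -> c <= l.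
Proof.
  intros Hu Hb. apply Rnot_lt_le. intro Hlt.
  destruct (Hu (c - l)) as [N1 HN1]; [lra|].
  specialize (HN1 (N0 + N1)%nat ltac:(lia)). specialize (Hb (N0 + N1)%nat ltac:(lia)).
  unfold R_dist in HN1. apply Rabs_lt_between' in HN1. lra.
Qed.

Lemma Lf_lip p q : Rabs (Lf q - Lf p) <= cL * dist2 p q.
Proof.
  unfold Lf, cL. rewrite <- Rabs_Ropp. replace (- (l1 * fst q + l2 * snd q - (l1 * fst p + l2 * snd p))) with
    (l1 * (fst p - fst q) + l2 * (snd p - snd q)) by ring.
  eapply Rle_trans; [apply Rabs_triang|]. rewrite !Rabs_mult.
  pose proof (dist2_fst p q); pose proof (dist2_snd p q).
  pose proof (Rabs_pos l1); pose proof (Rabs_pos l2). nra.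
Qed.

Theorem sep_not_connected : ~ connected2 (TT M Dsep).
Proof.
  intros Hc. apply Hc.
  set (c := (UB0 + LB0) / 2 + t * UB1).
  pose proof t_nonneg.
  assert (cL0 : 0 <= cL) by (unfold cL; pose proof (Rabs_pos l1); pose proof (Rabs_pos l2); lra).
  set (B := 1 + nrm (pscale K f)).
  assert (HBd : forall d, In d Dsep -> nrm d <= B).
  { intros d Hd. pose proof (nrm_nonneg (pscale K f)). unfold B.
    destruct Hd as [E|[E|[E|[]]]]; rewrite <- E; try lra.
    - assert (nrm pzero <= 1) by (unfold nrm, pzero; simpl; rewrite Rabs_R0, Rmax_left; lra). lra.
    - assert (nrm e1 <= 1) by (unfold nrm, e1; simpl; rewrite Rabs_R0, Rabs_R1, Rmax_left; lra). lra. }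
  assert (Hup : forall x, TT M Dsep x -> Lf x < c \/ c < Lf x).
  { intros x [w [Hw Hx]]. assert (Hw0 := Hw 0%nat).
    destruct Hw0 as [E|[E|[E|[]]]].
    - left. apply Rle_lt_trans with (UB0 + t * UB1); [|unfold c; lra].
      eapply (cv_le_ev _ _ _ N); [apply cv_Lf; eauto|]. intros n Hn. cbv beta. rewrite Lf_psum. apply upper_sum; auto.
    - left. apply Rle_lt_trans with (UB0 + t * UB1); [|unfold c; lra].
      eapply (cv_le_ev _ _ _ N); [apply cv_Lf; eauto|]. intros n Hn. cbv beta. rewrite Lf_psum. apply upper_sum; auto.
    - right. apply Rlt_le_trans with (LB0 + t * LB1).
      { unfold c. assert (t * UB1 <= t * LB1) by (apply Rmult_le_compat_l; auto). lra. }
      eapply (cv_ge_ev _ _ _ N); [apply cv_Lf; eauto|]. intros n Hn. cbv beta. rewrite Lf_psum. apply lower_sum; auto. }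
  exists (fun z => Lf z < c), (fun z => c < Lf z). repeat split.
  - intros p Hp. exists ((c - Lf p) / (cL + 1)). split. apply Rdiv_lt_0_compat; lra.
    intros q Hq. pose proof (Lf_lip p q). apply Rabs_le_inv' in H0.
    assert (cL * dist2 p q <= cL * ((c - Lf p) / (cL + 1))) by (apply Rmult_le_compat_l; lra).
    assert (cL * ((c - Lf p) / (cL + 1)) < c - Lf p).
    { apply Rlt_le_trans with ((cL + 1) * ((c - Lf p) / (cL + 1))).
      apply Rmult_lt_compat_r; [apply Rdiv_lt_0_compat|]; lra. right; field; lra. }
    lra.
  - intros p Hp. exists ((Lf p - c) / (cL + 1)). split. apply Rdiv_lt_0_compat; lra.
    intros q Hq. pose proof (Lf_lip p q). apply Rabs_le_inv' in H0.
    assert (cL * dist2 p q <= cL * ((Lf p - c) / (cL + 1))) by (apply Rmult_le_compat_l; lra).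
    assert (cL * ((Lf p - c) / (cL + 1)) < Lf p - c).
    { apply Rlt_le_trans with ((cL + 1) * ((Lf p - c) / (cL + 1))).
      apply Rmult_lt_compat_r; [apply Rdiv_lt_0_compat|]; lra. right; field; lra. }
    lra.
  - intros p Hp. apply Hup; auto.
  - set (w := wcons pzero (fun _ => pzero)).
    assert (Vw : valid Dsep w) by (intros [|i]; simpl; auto).
    destruct (valid_conv M H1 H4 Dsep B HBd w Vw) as [x Hx].
    exists x. split. exists w; auto.
    apply Rle_lt_trans with (UB0 + t * UB1); [|unfold c; lra].
    eapply (cv_le_ev _ _ _ N); [apply cv_Lf; eauto|]. intros n Hn. cbv beta. rewrite Lf_psum. apply upper_sum; auto.
  - set (w := wcons (pscale K f) (fun _ => pzero)).
    assert (Vw : valid Dsep w) by (intros [|i]; simpl; auto).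
    destruct (valid_conv M H1 H4 Dsep B HBd w Vw) as [x Hx].
    exists x. split. exists w; auto.
    apply Rlt_le_trans with (LB0 + t * LB1).
    { unfold c. assert (t * UB1 <= t * LB1) by (apply Rmult_le_compat_l; auto). lra. }
    eapply (cv_ge_ev _ _ _ N); [apply cv_Lf; eauto|]. intros n Hn. cbv beta. rewrite Lf_psum. apply lower_sum; auto.
  - intros p _ H0 H2. lra.
Qed.
End Sep.

Definition qmat : Type := (Q * Q * Q * Q)%type.
Definition rm_of (m : qmat) : rmat :=
  let '(a, b, c, d) := m in RM (Q2R a) (Q2R b) (Q2R c) (Q2R d).
Definition qr (x : Q * Q) : pt := (Q2R (fst x), Q2R (snd x)).
Definition qmv (m : qmat) (x : Q * Q) : Q * Q :=
  let '(a, b, c, d) := m in (Qred (a * fst x + b * snd x)%Q, Qred (c * fst x + d * snd x)%Q).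
Fixpoint qmpow (m : qmat) (n : nat) (x : Q * Q) : Q * Q :=
  match n with O => x | S n' => qmv m (qmpow m n' x) end.
Definition qmmul (m1 m2 : qmat) : qmat :=
  let '(a, b, c, d) := m1 in let '(a', b', c', d') := m2 in
  (Qred (a * a' + b * c')%Q, Qred (a * b' + b * d')%Q, Qred (c * a' + d * c')%Q, Qred (c * b' + d * d')%Q).
Fixpoint qmatpow (m : qmat) (n : nat) : qmat :=
  match n with O => (1, 0, 0, 1)%Q | S n' => qmmul m (qmatpow m n') end.

Definition qmax (a b : Q) : Q := if Qle_bool a b then b else a.
Definition qmin (a b : Q) : Q := if Qle_bool a b then a else b.
Definition qabs (a : Q) : Q := qmax a (- a).
Definition qnrm (x : Q * Q) : Q := qmax (qabs (fst x)) (qabs (snd x)).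
Fixpoint qsum (g : nat -> Q) (n : nat) : Q := match n with O => 0%Q | S n' => Qred (qsum g n' + g n')%Q end.

Lemma Q2R_red a : Q2R (Qred a) = Q2R a.
Proof. apply Qeq_eqR, Qred_correct. Qed.

Lemma qmv_ok m x : mv (rm_of m) (qr x) = qr (qmv m x).
Proof.
  destruct m as [[[a b] c] d]. unfold mv, rm_of, qr, qmv; cbn [fst snd ra rb rc rd].
  rewrite !Q2R_red, !Q2R_plus, !Q2R_mult. reflexivity.
Qed.
Lemma qmpow_ok m n x : mpow (rm_of m) n (qr x) = qr (qmpow m n x).
Proof. induction n; simpl; auto. rewrite IHn, qmv_ok; auto. Qed.

Lemma qmmul_ok m1 m2 x : mv (rm_of m1) (mv (rm_of m2) x) = mv (rm_of (qmmul m1 m2)) x.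
Proof.
  destruct m1 as [[[a b] c] d]. destruct m2 as [[[a' b'] c'] d'].
  unfold mv, rm_of, qmmul; cbn [fst snd ra rb rc rd]. rewrite !Q2R_red, !Q2R_plus, !Q2R_mult.
  apply pt_eq; simpl; ring.
Qed.
Lemma qmatpow_ok m n x : mpow (rm_of m) n x = mv (rm_of (qmatpow m n)) x.
Proof.
  induction n; simpl.
  - unfold mv; simpl. rewrite RMicromega.Q2R_1, RMicromega.Q2R_0. apply pt_eq; simpl; ring.
  - rewrite IHn, qmmul_ok. reflexivity.
Qed.

Lemma qmax_ok a b : Q2R (qmax a b) = Rmax (Q2R a) (Q2R b).
Proof.
  unfold qmax. destruct (Qle_bool a b) eqn:E.
  - apply Qle_bool_iff in E. apply Qle_Rle in E. rewrite Rmax_right; auto.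
  - assert (~ (a <= b)%Q) by (intro H; apply Qle_bool_iff in H; congruence).
    apply Qnot_le_lt in H. apply Qlt_Rlt in H. rewrite Rmax_left; lra.
Qed.
Lemma qmin_ok a b : Q2R (qmin a b) = Rmin (Q2R a) (Q2R b).
Proof.
  unfold qmin. destruct (Qle_bool a b) eqn:E.
  - apply Qle_bool_iff in E. apply Qle_Rle in E. rewrite Rmin_left; auto.
  - assert (~ (a <= b)%Q) by (intro H; apply Qle_bool_iff in H; congruence).
    apply Qnot_le_lt in H. apply Qlt_Rlt in H. rewrite Rmin_right; lra.
Qed.
Lemma qabs_ok a : Q2R (qabs a) = Rabs (Q2R a).
Proof.
  unfold qabs. rewrite qmax_ok, Q2R_opp. unfold Rabs, Rmax.
  destruct (Rcase_abs (Q2R a)); destruct (Rle_dec (Q2R a) (- Q2R a)); lra.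
Qed.
Lemma qnrm_ok x : Q2R (qnrm x) = nrm (qr x).
Proof. unfold qnrm, nrm, qr; simpl. rewrite qmax_ok, !qabs_ok. reflexivity. Qed.
Lemma qsum_ok g n : Q2R (qsum g n) = rsum (fun i => Q2R (g i)) n.
Proof. induction n; cbn [qsum rsum]. apply RMicromega.Q2R_0. rewrite Q2R_red, Q2R_plus, IHn. reflexivity. Qed.

Definition rownorm (m : qmat) : Q :=
  let '(a, b, c, d) := m in qmax (qabs a + qabs b) (qabs c + qabs d).

Lemma H_of_rownorm m c x : Q2R (rownorm m) <= c -> nrm (mv (rm_of m) x) <= c * nrm x.
Proof.
  intros H. eapply Rle_trans; [apply mv_bound|]. apply Rmult_le_compat_r; [apply nrm_nonneg|].
  destruct m as [[[a b] d'] e]. unfold rownorm in H. simpl.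
  rewrite qmax_ok, !Q2R_plus, !qabs_ok in H. auto.
Qed.

Definition contr_check (m : qmat) : bool :=
  (Qle_bool (rownorm m) 2 && Qle_bool (rownorm (qmatpow m 4)) (1#2))%bool.

Lemma contr_ok m : contr_check m = true ->
  (forall x, nrm (mv (rm_of m) x) <= 2 * nrm x) /\ (forall x, nrm (mpow (rm_of m) 4 x) <= /2 * nrm x).
Proof.
  unfold contr_check. intros H. apply andb_prop in H as [Ha Hb].
  apply RMicromega.Qle_true in Ha. apply RMicromega.Qle_true in Hb.
  split; intro x.
  - apply H_of_rownorm. replace 2 with (Q2R 2) by (unfold Q2R; simpl; field). auto.
  - rewrite qmatpow_ok. apply H_of_rownorm. replace (/2) with (Q2R (1#2)) by (unfold Q2R; simpl; field). auto.
Qed.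

Section QSep.
Variable m : qmat.
Variable s : Q.
Variables l1 l2 : Q.
Variable N : nat.
Definition qLf (z : Q * Q) : Q := (l1 * fst z + l2 * snd z)%Q.
Definition qal (i : nat) : Q := qLf (qmpow m (S i) (1, 0)%Q).
Definition qbe (i : nat) : Q := qLf (qmpow m (S i) (0, s)%Q).
Definition qcL : Q := (qabs l1 + qabs l2)%Q.
Definition qtA : Q := (qcL * 30 * (qnrm (qmpow m (S N) (1, 0)%Q) + 2 * qnrm (qmpow m (S N) (0, s)%Q)))%Q.
Definition qtB : Q := (qcL * 30 * qnrm (qmpow m (S N) (0, s)%Q))%Q.
Definition qUB0 : Q := (qmax 0 (qal 0) + qsum (fun i => qmax 0 (qmax (qal (S i)) (2 * qbe (S i)))) (N - 1) + qtA)%Q.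
Definition qUB1 : Q := (qsum (fun i => qmax (qbe (S i)) 0) (N - 1) + qtB)%Q.
Definition qLB0 : Q := (2 * qbe 0 + qsum (fun i => qmin 0 (qmin (qal (S i)) (2 * qbe (S i)))) (N - 1) - qtA)%Q.
Definition qLB1 : Q := (qbe 0 + qsum (fun i => qmin (qbe (S i)) 0) (N - 1) - qtB)%Q.
Definition sep_check : bool := (negb (Qle_bool qLB0 qUB0) && Qle_bool qUB1 qLB1)%bool.

Lemma Q2R_num (z : Z) : Q2R (inject_Z z) = IZR z.
Proof. unfold Q2R, inject_Z; simpl. field. Qed.

Lemma e1_q : e1 = qr (1, 0)%Q.
Proof. unfold e1, qr; simpl. rewrite RMicromega.Q2R_1, RMicromega.Q2R_0. reflexivity. Qed.
Lemma Lf_q z : Lf (Q2R l1) (Q2R l2) (qr z) = Q2R (qLf z).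
Proof. unfold Lf, qLf, qr. rewrite Q2R_plus, !Q2R_mult. reflexivity. Qed.
Lemma al_q i : al (rm_of m) (Q2R l1) (Q2R l2) i = Q2R (qal i).
Proof. unfold al, qal. rewrite e1_q, qmpow_ok, Lf_q. reflexivity. Qed.
Lemma be_q i : be (rm_of m) (qr (0, s)%Q) (Q2R l1) (Q2R l2) i = Q2R (qbe i).
Proof. unfold be, qbe. rewrite qmpow_ok, Lf_q. reflexivity. Qed.
Lemma cL_q : cL (Q2R l1) (Q2R l2) = Q2R qcL.
Proof. unfold cL, qcL. rewrite Q2R_plus, !qabs_ok. reflexivity. Qed.
Lemma Q2R_30 : Q2R 30 = 30. Proof. unfold Q2R; simpl; field. Qed.
Lemma Q2R_2 : Q2R 2 = 2. Proof. unfold Q2R; simpl; field. Qed.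
Lemma tA_q : tA (rm_of m) (qr (0, s)%Q) (Q2R l1) (Q2R l2) N = Q2R qtA.
Proof.
  unfold tA, qtA. rewrite cL_q, !Q2R_mult, Q2R_plus, Q2R_mult, Q2R_30, Q2R_2, !qnrm_ok, <- !qmpow_ok, <- e1_q.
  reflexivity.
Qed.
Lemma tB_q : tB (rm_of m) (qr (0, s)%Q) (Q2R l1) (Q2R l2) N = Q2R qtB.
Proof.
  unfold tB, qtB. rewrite cL_q, !Q2R_mult, Q2R_30, !qnrm_ok, <- !qmpow_ok. reflexivity.
Qed.

Lemma sep_check_ok : sep_check = true ->
  UB0 (rm_of m) (qr (0, s)%Q) (Q2R l1) (Q2R l2) N < LB0 (rm_of m) (qr (0, s)%Q) (Q2R l1) (Q2R l2) N /\ UB1 (rm_of m) (qr (0, s)%Q) (Q2R l1) (Q2R l2) N <= LB1 (rm_of m) (qr (0, s)%Q) (Q2R l1) (Q2R l2) N.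
Proof.
  unfold sep_check. intros H. apply andb_prop in H as [Ha Hb].
  assert (EU0 : UB0 (rm_of m) (qr (0, s)%Q) (Q2R l1) (Q2R l2) N = Q2R qUB0).
  { unfold UB0, qUB0. rewrite !Q2R_plus, qmax_ok, RMicromega.Q2R_0, al_q, tA_q, qsum_ok. f_equal. f_equal.
    apply rsum_ext. intros i _. unfold max3. rewrite !qmax_ok, RMicromega.Q2R_0, Q2R_mult, Q2R_2, al_q, be_q.
    reflexivity. }
  assert (EL0 : LB0 (rm_of m) (qr (0, s)%Q) (Q2R l1) (Q2R l2) N = Q2R qLB0).
  { unfold LB0, qLB0. rewrite !Q2R_minus, !Q2R_plus, Q2R_mult, Q2R_2, be_q, tA_q, qsum_ok. f_equal. f_equal.
    apply rsum_ext. intros i _. unfold min3. rewrite !qmin_ok, RMicromega.Q2R_0, Q2R_mult, Q2R_2, al_q, be_q.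
    reflexivity. }
  assert (EU1 : UB1 (rm_of m) (qr (0, s)%Q) (Q2R l1) (Q2R l2) N = Q2R qUB1).
  { unfold UB1, qUB1. rewrite Q2R_plus, tB_q, qsum_ok. f_equal.
    apply rsum_ext. intros i _. rewrite qmax_ok, RMicromega.Q2R_0, be_q. reflexivity. }
  assert (EL1 : LB1 (rm_of m) (qr (0, s)%Q) (Q2R l1) (Q2R l2) N = Q2R qLB1).
  { unfold LB1, qLB1. rewrite Q2R_minus, Q2R_plus, be_q, tB_q, qsum_ok. f_equal. f_equal.
    apply rsum_ext. intros i _. rewrite qmin_ok, RMicromega.Q2R_0, be_q. reflexivity. }
  rewrite EU0, EL0, EU1, EL1. split.
  - destruct (Qle_bool qLB0 qUB0) eqn:E; [discriminate|].
    assert (~ (qLB0 <= qUB0)%Q) by (intro H; apply Qle_bool_iff in H; congruence).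
    apply Qnot_le_lt in H. apply Qlt_Rlt; auto.
  - apply RMicromega.Qle_true; auto.
Qed.
End QSep.

Definition qM (p q : Z) : qmat := (Qred (- inject_Z p / inject_Z q), 1, Qred (-1 / inject_Z q), 0)%Q.

Lemma Q2R_inj z : Q2R (inject_Z z) = IZR z.
Proof. unfold Q2R, inject_Z; simpl. field. Qed.

Lemma Mpq_q p q : q <> 0%Z -> Mpq p q = rm_of (qM p q).
Proof.
  intros hq. assert (Hq : ~ (inject_Z q == 0)%Q).
  { intro H. apply hq. unfold Qeq in H; simpl in H. lia. }
  assert (IZR q <> 0) by (apply not_0_IZR; auto).
  unfold Mpq, qM, rm_of. rewrite !Q2R_red, !Q2R_div, Q2R_opp, !Q2R_inj by auto.
  rewrite RMicromega.Q2R_1, RMicromega.Q2R_0.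
  replace (Q2R (-1)) with (-1) by (unfold Q2R; simpl; field). reflexivity.
Qed.

Definition perm_ok (c a1 a2 : nat) : bool :=
  ((c <? 3) && (a1 <? 3) && (a2 <? 3) && negb (c =? a1) && negb (c =? a2) && negb (a1 =? a2))%nat.

Definition dz (k : Z) (i : nat) : Z * Z := nth i (Dz k) (0%Z, 0%Z).

Lemma DR_in k a : In a (DR k) -> exists i, (i < 3)%nat /\ a = zr (dz k i).
Proof.
  unfold DR, Dz, dz. simpl. intros [H|[H|[H|[]]]]; subst.
  exists 0%nat; split; auto. exists 1%nat; split; auto. exists 2%nat; split; auto.
Qed.
Lemma dz_in k i : (i < 3)%nat -> In (zr (dz k i)) (DR k).
Proof. intros Hi. unfold DR, dz. apply in_map, nth_In. simpl; lia. Qed.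

Lemma DR_bound k d : In d (DR k) -> nrm d <= 1 + Rabs (IZR k).
Proof.
  intros Hd. unfold DR, Dz in Hd. simpl in Hd. unfold zr, nrm in *.
  pose proof (Rabs_pos (IZR k)).
  destruct Hd as [<-|[<-|[<-|[]]]]; simpl; rewrite ?Rabs_R0, ?Rabs_R1; apply Rmax_lub; lra.
Qed.

Lemma conn_case p q k (c a1 a2 : nat) L1 L2 :
  Z.eqb q 0 = false -> contr_check (qM p q) = true -> perm_ok c a1 a2 = true ->
  check_auto p q k L1 (zsub (dz k a1) (dz k c)) = true ->
  check_auto p q k L2 (zsub (dz k a2) (dz k c)) = true ->
  connected2 (TT (Mpq p q) (DR k)).
Proof.
  intros Hq0 Hc Hp HL1 HL2.
  assert (hq : q <> 0%Z) by (apply Z.eqb_neq; auto).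
  destruct (contr_ok _ Hc) as [H1 H4]. rewrite <- (Mpq_q p q hq) in H1, H4.
  unfold perm_ok in Hp. repeat rewrite Bool.andb_true_iff in Hp.
  destruct Hp as [[[[[Hc3 Ha1] Ha2] Hca1] Hca2] Ha12].
  apply Nat.ltb_lt in Hc3; apply Nat.ltb_lt in Ha1; apply Nat.ltb_lt in Ha2.
  apply Bool.negb_true_iff, Nat.eqb_neq in Hca1; apply Bool.negb_true_iff, Nat.eqb_neq in Hca2;
  apply Bool.negb_true_iff, Nat.eqb_neq in Ha12.
  set (B := 1 + Rabs (IZR k)).
  assert (HB := DR_bound k).
  apply (TT_connected _ H1 H4 (DR k) B HB).
  exists (zr (dz k c)). split; [apply dz_in; auto|].
  assert (Hed : forall a L, (a < 3)%nat -> check_auto p q k L (zsub (dz k a) (dz k c)) = true ->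
     exists s t x, valid (DR k) s /\ valid (DR k) t /\ conv (Mpq p q) (wcons (zr (dz k a)) s) x /\
        conv (Mpq p q) (wcons (zr (dz k c)) t) x).
  { intros a L Ha HL.
    destruct (auto_conv p q k hq H1 H4 L _ HL) as [x [y [Hx [Hy Exy]]]].
    destruct (edge_of (Mpq p q) H1 H4 (DR k) B HB (zr (dz k c)) (zr (dz k a)) _ _ x y
       (dz_in k c Hc3) (dz_in k a Ha) (sw_valid p q k L _ HL) (tw_valid p q k L _ HL) Hx Hy) as [z [Z1 Z2]].
    { rewrite Exy, zr_sub. reflexivity. }
    exists (tw p q k L (zsub (dz k a) (dz k c))), (sw p q k L (zsub (dz k a) (dz k c))), z.
    split; [apply tw_valid; auto|]. split; [apply sw_valid; auto|]. auto. }
  intros a Ha. destruct (DR_in k a Ha) as [i [Hi ->]].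
  assert (i = c \/ i = a1 \/ i = a2) by lia.
  destruct H as [ -> | [ -> | -> ] ].
  - set (w := fun _ : nat => zr (dz k c)).
    assert (Vw : valid (DR k) w) by (intro; apply dz_in; auto).
    assert (Vw' : valid (DR k) (wcons (zr (dz k c)) w)) by (intros [|j]; apply dz_in; auto).
    destruct (valid_conv _ H1 H4 (DR k) B HB _ Vw') as [x Hx].
    exists w, w, x. auto.
  - apply (Hed a1 L1); auto.
  - apply (Hed a2 L2); auto.
Qed.

Lemma DR_sep_pos k : DR k = Dsep (qr (0, 1)%Q) (IZR k).
Proof.
  unfold DR, Dz, Dsep, e1, qr, zr, pzero, pscale; simpl.
  rewrite RMicromega.Q2R_0, RMicromega.Q2R_1. f_equal. f_equal. f_equal. f_equal; ring.
Qed.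
Lemma DR_sep_neg k : DR k = Dsep (qr (0, -1)%Q) (IZR (- k)).
Proof.
  unfold DR, Dz, Dsep, e1, qr, zr, pzero, pscale; simpl.
  rewrite RMicromega.Q2R_0. replace (Q2R (-1)) with (-1) by (unfold Q2R; simpl; field).
  rewrite opp_IZR. f_equal. f_equal. f_equal. f_equal; ring.
Qed.

Lemma sep_case_pos p q (l1 l2 : Q) :
  Z.eqb q 0 = false -> contr_check (qM p q) = true -> sep_check (qM p q) 1 l1 l2 40 = true ->
  forall k, (2 <= k)%Z -> ~ connected2 (TT (Mpq p q) (DR k)).
Proof.
  intros Hq0 Hc Hs k Hk.
  assert (hq : q <> 0%Z) by (apply Z.eqb_neq; auto).
  destruct (contr_ok _ Hc) as [H1 H4]. rewrite (Mpq_q p q hq).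
  destruct (sep_check_ok _ _ _ _ _ Hs) as [G0 G1].
  rewrite DR_sep_pos. apply (sep_not_connected _ H1 H4 _ _ (IZR_le 2 k Hk) _ _ 40 ltac:(lia) G0 G1).
Qed.

Lemma sep_case_neg p q (l1 l2 : Q) :
  Z.eqb q 0 = false -> contr_check (qM p q) = true -> sep_check (qM p q) (-1) l1 l2 40 = true ->
  forall k, (k <= -2)%Z -> ~ connected2 (TT (Mpq p q) (DR k)).
Proof.
  intros Hq0 Hc Hs k Hk.
  assert (hq : q <> 0%Z) by (apply Z.eqb_neq; auto).
  destruct (contr_ok _ Hc) as [H1 H4]. rewrite (Mpq_q p q hq).
  destruct (sep_check_ok _ _ _ _ _ Hs) as [G0 G1].
  rewrite DR_sep_neg. apply (sep_not_connected _ H1 H4 _ _ (IZR_le 2 (-k) ltac:(lia)) _ _ 40 ltac:(lia) G0 G1).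
Qed.

Lemma case_iff p q (l1 l2 l1' l2' : Q) :
  (forall k, (k = 1 \/ k = -1)%Z -> connected2 (TT (Mpq p q) (DR k))) ->
  Z.eqb q 0 = false -> contr_check (qM p q) = true -> sep_check (qM p q) 1 l1 l2 40 = true ->
  sep_check (qM p q) (-1) l1' l2' 40 = true ->
  forall k, k <> 0%Z -> (connected2 (TT (Mpq p q) (DR k)) <-> (k = 1 \/ k = -1)%Z).
Proof.
  intros Hcon Hq Hc Hs1 Hs2 k Hk. split.
  - intros H. destruct (Z_lt_le_dec k 2) as [Hk2|Hk2].
    + destruct (Z_lt_le_dec (-2) k) as [Hk3|Hk3]. lia.
      exfalso. apply (sep_case_neg p q l1' l2' Hq Hc Hs2 k Hk3 H).
    + exfalso. apply (sep_case_pos p q l1 l2 Hq Hc Hs1 k Hk2 H).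
  - apply Hcon.
Qed.

Lemma conn_m3_3_1 : connected2 (TT (Mpq (-3) (3)) (DR (1))).
Proof.
  apply (conn_case (-3) (3) (1) 1 0 2
    ((((-1)%Z, (0)%Z), (0%nat, 1%nat)) :: (((1)%Z, (-1)%Z), (0%nat, 2%nat)) :: (((3)%Z, (-1)%Z), (2%nat, 0%nat)) :: nil)
    ((((-1)%Z, (1)%Z), (2%nat, 0%nat)) :: (((-3)%Z, (1)%Z), (0%nat, 2%nat)) :: nil)); [vm_compute; reflexivity ..].
Qed.

Lemma conn_m3_3_m1 : connected2 (TT (Mpq (-3) (3)) (DR (-1))).
Proof.
  apply (conn_case (-3) (3) (-1) 0 1 2
    ((((1)%Z, (0)%Z), (0%nat, 0%nat)) :: (((0)%Z, (1)%Z), (1%nat, 2%nat)) :: (((-4)%Z, (2)%Z), (0%nat, 1%nat)) :: (((-5)%Z, (2)%Z), (2%nat, 1%nat)) :: nil)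
    ((((0)%Z, (-1)%Z), (2%nat, 1%nat)) :: (((4)%Z, (-2)%Z), (1%nat, 0%nat)) :: (((5)%Z, (-2)%Z), (1%nat, 2%nat)) :: nil)); [vm_compute; reflexivity ..].
Qed.

Lemma conn_m2_3_1 : connected2 (TT (Mpq (-2) (3)) (DR (1))).
Proof.
  apply (conn_case (-2) (3) (1) 0 1 2
    ((((1)%Z, (0)%Z), (0%nat, 0%nat)) :: (((0)%Z, (1)%Z), (2%nat, 1%nat)) :: (((-2)%Z, (1)%Z), (0%nat, 1%nat)) :: (((-2)%Z, (0)%Z), (0%nat, 2%nat)) :: (((0)%Z, (-1)%Z), (1%nat, 2%nat)) :: (((2)%Z, (-1)%Z), (1%nat, 0%nat)) :: (((2)%Z, (0)%Z), (2%nat, 0%nat)) :: nil)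
    ((((0)%Z, (1)%Z), (2%nat, 1%nat)) :: (((-2)%Z, (1)%Z), (0%nat, 1%nat)) :: (((-2)%Z, (0)%Z), (0%nat, 2%nat)) :: (((0)%Z, (-1)%Z), (1%nat, 2%nat)) :: (((2)%Z, (-1)%Z), (1%nat, 0%nat)) :: (((2)%Z, (0)%Z), (2%nat, 0%nat)) :: nil)); [vm_compute; reflexivity ..].
Qed.

Lemma conn_m2_3_m1 : connected2 (TT (Mpq (-2) (3)) (DR (-1))).
Proof.
  apply (conn_case (-2) (3) (-1) 0 1 2
    ((((1)%Z, (0)%Z), (0%nat, 0%nat)) :: (((0)%Z, (1)%Z), (0%nat, 2%nat)) :: (((-3)%Z, (1)%Z), (2%nat, 1%nat)) :: (((-2)%Z, (0)%Z), (2%nat, 0%nat)) :: (((0)%Z, (-1)%Z), (2%nat, 0%nat)) :: (((3)%Z, (-1)%Z), (1%nat, 2%nat)) :: (((2)%Z, (0)%Z), (0%nat, 2%nat)) :: nil)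
    ((((0)%Z, (-1)%Z), (2%nat, 0%nat)) :: (((3)%Z, (-1)%Z), (1%nat, 2%nat)) :: (((2)%Z, (0)%Z), (0%nat, 2%nat)) :: (((0)%Z, (1)%Z), (0%nat, 2%nat)) :: (((-3)%Z, (1)%Z), (2%nat, 1%nat)) :: (((-2)%Z, (0)%Z), (2%nat, 0%nat)) :: nil)); [vm_compute; reflexivity ..].
Qed.

Lemma conn_m1_3_1 : connected2 (TT (Mpq (-1) (3)) (DR (1))).
Proof.
  apply (conn_case (-1) (3) (1) 0 1 2
    ((((1)%Z, (0)%Z), (0%nat, 0%nat)) :: (((0)%Z, (1)%Z), (2%nat, 1%nat)) :: (((-2)%Z, (0)%Z), (0%nat, 2%nat)) :: (((0)%Z, (-1)%Z), (1%nat, 2%nat)) :: (((2)%Z, (0)%Z), (2%nat, 0%nat)) :: nil)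
    ((((0)%Z, (1)%Z), (2%nat, 1%nat)) :: (((-2)%Z, (0)%Z), (0%nat, 2%nat)) :: (((0)%Z, (-1)%Z), (1%nat, 2%nat)) :: (((2)%Z, (0)%Z), (2%nat, 0%nat)) :: nil)); [vm_compute; reflexivity ..].
Qed.

Lemma conn_m1_3_m1 : connected2 (TT (Mpq (-1) (3)) (DR (-1))).
Proof.
  apply (conn_case (-1) (3) (-1) 0 1 2
    ((((1)%Z, (0)%Z), (0%nat, 0%nat)) :: (((0)%Z, (1)%Z), (0%nat, 1%nat)) :: (((-2)%Z, (1)%Z), (2%nat, 1%nat)) :: (((-2)%Z, (0)%Z), (2%nat, 0%nat)) :: (((0)%Z, (-1)%Z), (1%nat, 0%nat)) :: (((2)%Z, (-1)%Z), (1%nat, 2%nat)) :: (((2)%Z, (0)%Z), (0%nat, 2%nat)) :: nil)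
    ((((0)%Z, (-1)%Z), (1%nat, 0%nat)) :: (((2)%Z, (-1)%Z), (1%nat, 2%nat)) :: (((2)%Z, (0)%Z), (0%nat, 2%nat)) :: (((0)%Z, (1)%Z), (0%nat, 1%nat)) :: (((-2)%Z, (1)%Z), (2%nat, 1%nat)) :: (((-2)%Z, (0)%Z), (2%nat, 0%nat)) :: nil)); [vm_compute; reflexivity ..].
Qed.

Lemma conn_0_3_1 : connected2 (TT (Mpq (0) (3)) (DR (1))).
Proof.
  apply (conn_case (0) (3) (1) 0 1 2
    ((((1)%Z, (0)%Z), (0%nat, 0%nat)) :: (((0)%Z, (1)%Z), (0%nat, 1%nat)) :: (((-2)%Z, (0)%Z), (0%nat, 2%nat)) :: (((0)%Z, (-1)%Z), (1%nat, 0%nat)) :: (((2)%Z, (0)%Z), (2%nat, 0%nat)) :: nil)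
    ((((0)%Z, (1)%Z), (0%nat, 1%nat)) :: (((-2)%Z, (0)%Z), (0%nat, 2%nat)) :: (((0)%Z, (-1)%Z), (1%nat, 0%nat)) :: (((2)%Z, (0)%Z), (2%nat, 0%nat)) :: nil)); [vm_compute; reflexivity ..].
Qed.

Lemma conn_0_3_m1 : connected2 (TT (Mpq (0) (3)) (DR (-1))).
Proof.
  apply (conn_case (0) (3) (-1) 0 1 2
    ((((1)%Z, (0)%Z), (0%nat, 0%nat)) :: (((0)%Z, (1)%Z), (0%nat, 1%nat)) :: (((-2)%Z, (0)%Z), (2%nat, 0%nat)) :: (((0)%Z, (-1)%Z), (1%nat, 0%nat)) :: (((2)%Z, (0)%Z), (0%nat, 2%nat)) :: nil)
    ((((0)%Z, (-1)%Z), (1%nat, 0%nat)) :: (((2)%Z, (0)%Z), (0%nat, 2%nat)) :: (((0)%Z, (1)%Z), (0%nat, 1%nat)) :: (((-2)%Z, (0)%Z), (2%nat, 0%nat)) :: nil)); [vm_compute; reflexivity ..].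
Qed.

Lemma conn_1_3_1 : connected2 (TT (Mpq (1) (3)) (DR (1))).
Proof.
  apply (conn_case (1) (3) (1) 0 1 2
    ((((1)%Z, (0)%Z), (0%nat, 0%nat)) :: (((0)%Z, (1)%Z), (0%nat, 1%nat)) :: (((-2)%Z, (-1)%Z), (1%nat, 2%nat)) :: (((2)%Z, (0)%Z), (2%nat, 0%nat)) :: nil)
    ((((0)%Z, (1)%Z), (0%nat, 1%nat)) :: (((-2)%Z, (-1)%Z), (1%nat, 2%nat)) :: (((2)%Z, (0)%Z), (2%nat, 0%nat)) :: nil)); [vm_compute; reflexivity ..].
Qed.

Lemma conn_1_3_m1 : connected2 (TT (Mpq (1) (3)) (DR (-1))).
Proof.
  apply (conn_case (1) (3) (-1) 0 1 2
    ((((1)%Z, (0)%Z), (0%nat, 0%nat)) :: (((0)%Z, (1)%Z), (2%nat, 1%nat)) :: (((-2)%Z, (0)%Z), (2%nat, 0%nat)) :: (((0)%Z, (-1)%Z), (1%nat, 2%nat)) :: (((2)%Z, (0)%Z), (0%nat, 2%nat)) :: nil)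
    ((((0)%Z, (-1)%Z), (1%nat, 2%nat)) :: (((2)%Z, (0)%Z), (0%nat, 2%nat)) :: (((0)%Z, (1)%Z), (2%nat, 1%nat)) :: (((-2)%Z, (0)%Z), (2%nat, 0%nat)) :: nil)); [vm_compute; reflexivity ..].
Qed.

Lemma conn_2_3_1 : connected2 (TT (Mpq (2) (3)) (DR (1))).
Proof.
  apply (conn_case (2) (3) (1) 0 1 2
    ((((1)%Z, (0)%Z), (0%nat, 0%nat)) :: (((0)%Z, (1)%Z), (0%nat, 2%nat)) :: (((-3)%Z, (-1)%Z), (1%nat, 2%nat)) :: (((2)%Z, (0)%Z), (2%nat, 0%nat)) :: nil)
    ((((0)%Z, (1)%Z), (0%nat, 2%nat)) :: (((-3)%Z, (-1)%Z), (1%nat, 2%nat)) :: (((2)%Z, (0)%Z), (2%nat, 0%nat)) :: nil)); [vm_compute; reflexivity ..].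
Qed.

Lemma conn_2_3_m1 : connected2 (TT (Mpq (2) (3)) (DR (-1))).
Proof.
  apply (conn_case (2) (3) (-1) 0 1 2
    ((((1)%Z, (0)%Z), (0%nat, 0%nat)) :: (((0)%Z, (1)%Z), (2%nat, 1%nat)) :: (((-2)%Z, (-1)%Z), (1%nat, 0%nat)) :: (((2)%Z, (0)%Z), (0%nat, 2%nat)) :: nil)
    ((((0)%Z, (-1)%Z), (1%nat, 2%nat)) :: (((2)%Z, (1)%Z), (0%nat, 1%nat)) :: (((-2)%Z, (0)%Z), (2%nat, 0%nat)) :: nil)); [vm_compute; reflexivity ..].
Qed.

Lemma conn_3_3_1 : connected2 (TT (Mpq (3) (3)) (DR (1))).
Proof.
  apply (conn_case (3) (3) (1) 0 1 2
    ((((1)%Z, (0)%Z), (0%nat, 0%nat)) :: (((0)%Z, (1)%Z), (1%nat, 2%nat)) :: (((-4)%Z, (-2)%Z), (1%nat, 0%nat)) :: (((5)%Z, (2)%Z), (2%nat, 1%nat)) :: (((-5)%Z, (-2)%Z), (1%nat, 2%nat)) :: nil)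
    ((((0)%Z, (1)%Z), (1%nat, 2%nat)) :: (((-4)%Z, (-2)%Z), (1%nat, 0%nat)) :: (((5)%Z, (2)%Z), (2%nat, 1%nat)) :: (((-5)%Z, (-2)%Z), (1%nat, 2%nat)) :: nil)); [vm_compute; reflexivity ..].
Qed.

Lemma conn_3_3_m1 : connected2 (TT (Mpq (3) (3)) (DR (-1))).
Proof.
  apply (conn_case (3) (3) (-1) 1 0 2
    ((((-1)%Z, (0)%Z), (1%nat, 0%nat)) :: (((-1)%Z, (-1)%Z), (0%nat, 2%nat)) :: (((3)%Z, (1)%Z), (0%nat, 2%nat)) :: (((-3)%Z, (-1)%Z), (2%nat, 0%nat)) :: nil)
    ((((-1)%Z, (-1)%Z), (0%nat, 2%nat)) :: (((3)%Z, (1)%Z), (0%nat, 2%nat)) :: (((-3)%Z, (-1)%Z), (2%nat, 0%nat)) :: nil)); [vm_compute; reflexivity ..].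
Qed.

Lemma conn_m1_m3_1 : connected2 (TT (Mpq (-1) (-3)) (DR (1))).
Proof.
  apply (conn_case (-1) (-3) (1) 1 0 2
    ((((-1)%Z, (0)%Z), (0%nat, 1%nat)) :: (((1)%Z, (-1)%Z), (0%nat, 2%nat)) :: (((-3)%Z, (1)%Z), (0%nat, 1%nat)) :: (((4)%Z, (-2)%Z), (0%nat, 1%nat)) :: (((-5)%Z, (2)%Z), (1%nat, 2%nat)) :: (((5)%Z, (-2)%Z), (2%nat, 1%nat)) :: nil)
    ((((-1)%Z, (1)%Z), (2%nat, 0%nat)) :: (((3)%Z, (-1)%Z), (1%nat, 0%nat)) :: (((-4)%Z, (2)%Z), (1%nat, 0%nat)) :: (((5)%Z, (-2)%Z), (2%nat, 1%nat)) :: (((-5)%Z, (2)%Z), (1%nat, 2%nat)) :: nil)); [vm_compute; reflexivity ..].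
Qed.

Lemma conn_m1_m3_m1 : connected2 (TT (Mpq (-1) (-3)) (DR (-1))).
Proof.
  apply (conn_case (-1) (-3) (-1) 0 1 2
    ((((1)%Z, (0)%Z), (0%nat, 0%nat)) :: (((0)%Z, (1)%Z), (1%nat, 2%nat)) :: (((2)%Z, (0)%Z), (0%nat, 2%nat)) :: nil)
    ((((0)%Z, (-1)%Z), (2%nat, 1%nat)) :: (((-2)%Z, (0)%Z), (2%nat, 0%nat)) :: nil)); [vm_compute; reflexivity ..].
Qed.

Lemma conn_0_m3_1 : connected2 (TT (Mpq (0) (-3)) (DR (1))).
Proof.
  apply (conn_case (0) (-3) (1) 0 1 2
    ((((1)%Z, (0)%Z), (0%nat, 0%nat)) :: (((0)%Z, (1)%Z), (1%nat, 0%nat)) :: (((2)%Z, (0)%Z), (2%nat, 0%nat)) :: nil)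
    ((((0)%Z, (1)%Z), (1%nat, 0%nat)) :: (((2)%Z, (0)%Z), (2%nat, 0%nat)) :: nil)); [vm_compute; reflexivity ..].
Qed.

Lemma conn_0_m3_m1 : connected2 (TT (Mpq (0) (-3)) (DR (-1))).
Proof.
  apply (conn_case (0) (-3) (-1) 0 1 2
    ((((1)%Z, (0)%Z), (0%nat, 0%nat)) :: (((0)%Z, (1)%Z), (1%nat, 0%nat)) :: (((2)%Z, (0)%Z), (0%nat, 2%nat)) :: nil)
    ((((0)%Z, (-1)%Z), (0%nat, 1%nat)) :: (((-2)%Z, (0)%Z), (2%nat, 0%nat)) :: nil)); [vm_compute; reflexivity ..].
Qed.

Lemma conn_1_m3_1 : connected2 (TT (Mpq (1) (-3)) (DR (1))).
Proof.
  apply (conn_case (1) (-3) (1) 0 1 2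
    ((((1)%Z, (0)%Z), (0%nat, 0%nat)) :: (((0)%Z, (1)%Z), (1%nat, 2%nat)) :: (((2)%Z, (0)%Z), (2%nat, 0%nat)) :: nil)
    ((((0)%Z, (1)%Z), (1%nat, 2%nat)) :: (((2)%Z, (0)%Z), (2%nat, 0%nat)) :: nil)); [vm_compute; reflexivity ..].
Qed.

Lemma conn_1_m3_m1 : connected2 (TT (Mpq (1) (-3)) (DR (-1))).
Proof.
  apply (conn_case (1) (-3) (-1) 1 0 2
    ((((-1)%Z, (0)%Z), (1%nat, 0%nat)) :: (((-1)%Z, (-1)%Z), (0%nat, 2%nat)) :: (((-3)%Z, (-1)%Z), (1%nat, 0%nat)) :: (((-4)%Z, (-2)%Z), (0%nat, 1%nat)) :: (((-5)%Z, (-2)%Z), (2%nat, 1%nat)) :: nil)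
    ((((-1)%Z, (-1)%Z), (0%nat, 2%nat)) :: (((-3)%Z, (-1)%Z), (1%nat, 0%nat)) :: (((-4)%Z, (-2)%Z), (0%nat, 1%nat)) :: (((-5)%Z, (-2)%Z), (2%nat, 1%nat)) :: nil)); [vm_compute; reflexivity ..].
Qed.

Lemma iff_m3_3 k : k <> 0%Z -> (connected2 (TT (Mpq (-3) (3)) (DR k)) <-> (k = 1 \/ k = -1)%Z).
Proof.
  apply (case_iff (-3) (3) (1) (2) (-1) (-2)); [|vm_compute; reflexivity ..].
  intros k' [-> | ->]; [apply conn_m3_3_1 | apply conn_m3_3_m1].
Qed.

Lemma iff_m2_3 k : k <> 0%Z -> (connected2 (TT (Mpq (-2) (3)) (DR k)) <-> (k = 1 \/ k = -1)%Z).
Proof.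
  apply (case_iff (-2) (3) (1) (2) (-2) (-3)); [|vm_compute; reflexivity ..].
  intros k' [-> | ->]; [apply conn_m2_3_1 | apply conn_m2_3_m1].
Qed.

Lemma iff_m1_3 k : k <> 0%Z -> (connected2 (TT (Mpq (-1) (3)) (DR k)) <-> (k = 1 \/ k = -1)%Z).
Proof.
  apply (case_iff (-1) (3) (1) (1) (-5) (-3)); [|vm_compute; reflexivity ..].
  intros k' [-> | ->]; [apply conn_m1_3_1 | apply conn_m1_3_m1].
Qed.

Lemma iff_0_3 k : k <> 0%Z -> (connected2 (TT (Mpq (0) (3)) (DR k)) <-> (k = 1 \/ k = -1)%Z).
Proof.
  apply (case_iff (0) (3) (1) (0) (-1) (0)); [|vm_compute; reflexivity ..].
  intros k' [-> | ->]; [apply conn_0_3_1 | apply conn_0_3_m1].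
Qed.

Lemma iff_1_3 k : k <> 0%Z -> (connected2 (TT (Mpq (1) (3)) (DR k)) <-> (k = 1 \/ k = -1)%Z).
Proof.
  apply (case_iff (1) (3) (5) (-3) (-1) (1)); [|vm_compute; reflexivity ..].
  intros k' [-> | ->]; [apply conn_1_3_1 | apply conn_1_3_m1].
Qed.

Lemma iff_2_3 k : k <> 0%Z -> (connected2 (TT (Mpq (2) (3)) (DR k)) <-> (k = 1 \/ k = -1)%Z).
Proof.
  apply (case_iff (2) (3) (4) (-6) (-3) (6)); [|vm_compute; reflexivity ..].
  intros k' [-> | ->]; [apply conn_2_3_1 | apply conn_2_3_m1].
Qed.

Lemma iff_3_3 k : k <> 0%Z -> (connected2 (TT (Mpq (3) (3)) (DR k)) <-> (k = 1 \/ k = -1)%Z).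
Proof.
  apply (case_iff (3) (3) (3) (-6) (-3) (6)); [|vm_compute; reflexivity ..].
  intros k' [-> | ->]; [apply conn_3_3_1 | apply conn_3_3_m1].
Qed.

Lemma iff_m1_m3 k : k <> 0%Z -> (connected2 (TT (Mpq (-1) (-3)) (DR k)) <-> (k = 1 \/ k = -1)%Z).
Proof.
  apply (case_iff (-1) (-3) (3) (6) (-1) (-2)); [|vm_compute; reflexivity ..].
  intros k' [-> | ->]; [apply conn_m1_m3_1 | apply conn_m1_m3_m1].
Qed.

Lemma iff_0_m3 k : k <> 0%Z -> (connected2 (TT (Mpq (0) (-3)) (DR k)) <-> (k = 1 \/ k = -1)%Z).
Proof.
  apply (case_iff (0) (-3) (1) (0) (-1) (0)); [|vm_compute; reflexivity ..].
  intros k' [-> | ->]; [apply conn_0_m3_1 | apply conn_0_m3_m1].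
Qed.

Lemma iff_1_m3 k : k <> 0%Z -> (connected2 (TT (Mpq (1) (-3)) (DR k)) <-> (k = 1 \/ k = -1)%Z).
Proof.
  apply (case_iff (1) (-3) (3) (-6) (-1) (2)); [|vm_compute; reflexivity ..].
  intros k' [-> | ->]; [apply conn_1_m3_1 | apply conn_1_m3_m1].
Qed.

Lemma cv_const c : Un_cv (fun _ : nat => c) c.
Proof. intros e He. exists O. intros. unfold R_dist. rewrite Rminus_diag, Rabs_R0. auto. Qed.

Lemma cv_mv G (s : nat -> pt) x :
  Un_cv (fun n => fst (s n)) (fst x) -> Un_cv (fun n => snd (s n)) (snd x) ->
  Un_cv (fun n => fst (mv G (s n))) (fst (mv G x)) /\ Un_cv (fun n => snd (mv G (s n))) (snd (mv G x)).
Proof.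
  intros H1 H2. unfold mv; simpl. split; apply CV_plus; apply CV_mult; auto; apply cv_const.
Qed.

Lemma lin_indep_det (v w : pt) : lin_indep2 v w -> fst v * snd w - snd v * fst w <> 0.
Proof.
  intros hv H0.
  destruct (Req_dec (snd w) 0) as [Hw2|Hw2].
  - destruct (Req_dec (snd v) 0) as [Hv2|Hv2].
    + destruct (Req_dec (fst w) 0) as [Hw1|Hw1].
      * destruct (Req_dec (fst v) 0) as [Hv1|Hv1].
        -- destruct (hv 1 0) as [H _]; [|lra].
           unfold padd, pscale, pzero. apply pt_eq; simpl; rewrite ?Hv1, ?Hv2, ?Hw1, ?Hw2; ring.
        -- destruct (hv (fst w) (- fst v)) as [_ H]; [|lra].
           unfold padd, pscale, pzero. apply pt_eq; simpl; rewrite ?Hv2, ?Hw2; ring.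
      * destruct (hv (fst w) (- fst v)) as [H _]; [|lra].
        unfold padd, pscale, pzero. apply pt_eq; simpl; rewrite ?Hv2, ?Hw2; ring.
    + destruct (hv (snd w) (- snd v)) as [_ H]; [|lra].
      unfold padd, pscale, pzero. apply pt_eq; simpl; [lra| ring].
  - destruct (hv (snd w) (- snd v)) as [H _]; [|lra].
    unfold padd, pscale, pzero. apply pt_eq; simpl; [lra| ring].
Qed.

Definition PmOf (v w : pt) : rmat := RM (fst v) (fst w) (snd v) (snd w).
Definition DlOf (v w : pt) : R := fst v * snd w - snd v * fst w.
Definition QmOf (v w : pt) : rmat :=
  RM (snd w / DlOf v w) (- fst w / DlOf v w) (- snd v / DlOf v w) (fst v / DlOf v w).

Lemma PQ_gen v w z : DlOf v w <> 0 -> mv (PmOf v w) (mv (QmOf v w) z) = z.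
Proof. intros H. unfold PmOf, QmOf, mv; simpl. unfold DlOf in *. apply pt_eq; simpl; field; auto. Qed.
Lemma QP_gen v w z : DlOf v w <> 0 -> mv (QmOf v w) (mv (PmOf v w) z) = z.
Proof. intros H. unfold PmOf, QmOf, mv; simpl. unfold DlOf in *. apply pt_eq; simpl; field; auto. Qed.

Lemma minv_P_gen A v y : detZ A <> 0%Z ->
  minv_apply A (mv (PmOf v (mapply A v)) y) =
  mv (PmOf v (mapply A v)) (mv (Mpq (- (m11 A + m22 A)) (detZ A)) y).
Proof.
  intros hdet.
  assert (Hq : IZR (detZ A) <> 0) by (apply not_0_IZR; auto).
  unfold minv_apply, Mpq, PmOf, mapply, mv in *; simpl. unfold detZ in *.
  rewrite minus_IZR, !mult_IZR in *. rewrite opp_IZR, plus_IZR.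
  apply pt_eq; simpl; field; auto.
Qed.

Section Transport.
Variable A : mat2Z.
Variable v : pt.
Variable k : Z.
Hypothesis hdet : detZ A <> 0%Z.
Hypothesis hv : lin_indep2 v (mapply A v).
Definition Pm := PmOf v (mapply A v).
Definition Qm := QmOf v (mapply A v).
Definition Mt := Mpq (- (m11 A + m22 A)) (detZ A).

Lemma Dl_nz : DlOf v (mapply A v) <> 0.
Proof. apply lin_indep_det. exact hv. Qed.
Lemma PQ z : mv Pm (mv Qm z) = z.
Proof. apply PQ_gen, Dl_nz. Qed.
Lemma QP z : mv Qm (mv Pm z) = z.
Proof. apply QP_gen, Dl_nz. Qed.
Lemma minv_P y : minv_apply A (mv Pm y) = mv Pm (mv Mt y).
Proof. apply minv_P_gen; auto. Qed.

Lemma minv_pow_P n y : minv_pow A n (mv Pm y) = mv Pm (mpow Mt n y).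
Proof. induction n; simpl; auto. rewrite IHn, minv_P. reflexivity. Qed.

Lemma partial_P d n : partial_sum A (fun i => mv Pm (d i)) n = mv Pm (psum Mt d n).
Proof.
  induction n.
  - simpl. unfold Pm, PmOf, mv, pzero; apply pt_eq; simpl; ring.
  - change (padd (partial_sum A (fun i => mv Pm (d i)) n) (minv_pow A (S n) (mv Pm (d n))) =
            mv Pm (psum Mt d (S n))).
    rewrite IHn, (minv_pow_P (S n)), psum_S, mv_padd. reflexivity.
Qed.

Definition DA : list pt := pzero :: v :: pscale (IZR k) (mapply A v) :: nil.

Lemma DA_map : DA = map (mv Pm) (DR k).
Proof.
  unfold DA, DR, Dz, zr, Pm, PmOf, mv, pscale, pzero; simpl.
  f_equal; [apply pt_eq; simpl; ring|]. f_equal; [apply pt_eq; simpl; ring|].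
  f_equal; apply pt_eq; simpl; ring.
Qed.

Lemma transport x : self_affine_set A DA x <-> exists y, TT Mt (DR k) y /\ x = mv Pm y.
Proof.
  split.
  - intros [d [Hd [Hf Hs]]].
    set (d' := fun i => mv Qm (d i)).
    assert (Hd' : valid (DR k) d').
    { intro i. specialize (Hd i). rewrite DA_map in Hd. apply in_map_iff in Hd as [e [Ee He]].
      unfold d'. rewrite <- Ee, QP. auto. }
    assert (Epart : forall n, partial_sum A d n = mv Pm (psum Mt d' n)).
    { intro n. rewrite <- partial_P. clear Hf Hs. induction n; simpl; auto.
      rewrite IHn. unfold d'. rewrite PQ. reflexivity. }
    exists (mv Qm x). split; [|rewrite PQ; auto].
    exists d'. split; auto.
    assert (E2 : forall n, psum Mt d' n = mv Qm (partial_sum A d n)) by (intro n; rewrite Epart, QP; auto).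
    destruct (cv_mv Qm (partial_sum A d) x Hf Hs) as [G1 G2].
    split; (eapply Un_cv_ext; [|eassumption]); intro n; simpl; rewrite E2; auto.
  - intros [y [[d' [Hd' [Hf Hs]]] ->]].
    exists (fun i => mv Pm (d' i)). split.
    + intro i. rewrite DA_map. apply in_map; auto.
    + destruct (cv_mv Pm (psum Mt d') y Hf Hs) as [G1 G2].
      split; (eapply Un_cv_ext; [|eassumption]); intro n; simpl; rewrite partial_P; auto.
Qed.
End Transport.

Lemma mv_lip G p0 q0 :
  dist2 (mv G p0) (mv G q0) <= 2 * (Rabs (ra G) + Rabs (rb G) + Rabs (rc G) + Rabs (rd G)) * dist2 p0 q0.
Proof.
  eapply Rle_trans; [apply dist2_le|].
  assert (E : psub (mv G p0) (mv G q0) = mv G (psub p0 q0)) by (rewrite mv_psub; auto).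
  rewrite E.
  pose proof (dist2_fst p0 q0). pose proof (dist2_snd p0 q0).
  assert (nrm (psub p0 q0) <= dist2 p0 q0) by (apply nrm_le; auto).
  pose proof (mv_bound G (psub p0 q0)).
  pose proof (Rabs_pos (ra G)); pose proof (Rabs_pos (rb G)); pose proof (Rabs_pos (rc G)); pose proof (Rabs_pos (rd G)).
  assert (Rmax (Rabs (ra G) + Rabs (rb G)) (Rabs (rc G) + Rabs (rd G)) <= Rabs (ra G) + Rabs (rb G) + Rabs (rc G) + Rabs (rd G))
    by (apply Rmax_lub; lra).
  pose proof (nrm_nonneg (psub p0 q0)).
  assert (Rmax (Rabs (ra G) + Rabs (rb G)) (Rabs (rc G) + Rabs (rd G)) * nrm (psub p0 q0) <=
          (Rabs (ra G) + Rabs (rb G) + Rabs (rc G) + Rabs (rd G)) * dist2 p0 q0).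
  { apply Rmult_le_compat; auto. apply Rle_trans with (Rabs (ra G) + Rabs (rb G)); [lra| apply Rmax_l]. }
  lra.
Qed.

Lemma conn_image (G : rmat) (S S' : pt -> Prop) :
  (forall x, S' x <-> exists y, S y /\ x = mv G y) -> connected2 S -> connected2 S'.
Proof.
  intros HS Hc [U [V [HU [HV [Hcov [[pu [Spu Upu]] [[pv [Spv Vpv]] Hdis]]]]]]].
  apply Hc. set (KG := 2 * (Rabs (ra G) + Rabs (rb G) + Rabs (rc G) + Rabs (rd G))).
  assert (KG0 : 0 <= KG) by (unfold KG; pose proof (Rabs_pos (ra G)); pose proof (Rabs_pos (rb G));
    pose proof (Rabs_pos (rc G)); pose proof (Rabs_pos (rd G)); lra).
  assert (Hop : forall W, open2 W -> open2 (fun y => W (mv G y))).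
  { intros W HW y Wy. destruct (HW _ Wy) as [e [He Hb]].
    exists (e / (KG + 1)). split. apply Rdiv_lt_0_compat; lra.
    intros z Hz. apply Hb. eapply Rle_lt_trans; [apply mv_lip|]. fold KG.
    pose proof (dist2_le y z). pose proof (nrm_nonneg (psub y z)).
    assert (0 <= dist2 y z) by (unfold dist2; apply sqrt_pos).
    apply Rle_lt_trans with ((KG + 1) * dist2 y z). nra.
    apply Rlt_le_trans with ((KG + 1) * (e / (KG + 1))). apply Rmult_lt_compat_l; lra.
    right; field; lra. }
  exists (fun y => U (mv G y)), (fun y => V (mv G y)). repeat split.
  - apply Hop; auto.
  - apply Hop; auto.
  - intros y Sy. apply Hcov. apply HS. eauto.
  - apply HS in Spu as [y [Sy ->]]. eauto.
  - apply HS in Spv as [y [Sy ->]]. eauto.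
  - intros y Sy Uy Vy. apply (Hdis (mv G y)); auto. apply HS; eauto.
Qed.

Lemma small_eig A (l w1 w2 : R) : (w1 <> 0 \/ w2 <> 0) ->
  IZR (m11 A) * w1 + IZR (m12 A) * w2 = l * w1 ->
  IZR (m21 A) * w1 + IZR (m22 A) * w2 = l * w2 -> -1 <= l <= 1 -> ~ expanding A.
Proof.
  intros Hw E1 E2 Hl Hexp.
  assert (Hev : is_eigenvalue A (l, 0)).
  { exists (w1, 0), (w2, 0). split.
    - destruct Hw as [H|H]; [left|right]; intro HH; injection HH; intros; lra.
    - unfold padd, pscale, cmul; simpl. split; apply pt_eq; simpl; lra. }
  specialize (Hexp _ Hev). simpl in Hexp.
  replace (l * l + 0 * 0) with (Rsqr l) in Hexp by (unfold Rsqr; ring).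
  rewrite sqrt_Rsqr_abs in Hexp. unfold Rabs in Hexp. destruct (Rcase_abs l); lra.
Qed.

Lemma quad_root (t d : Z) : (d = 3 /\ (4 <= t \/ t <= -4) \/ d = -3 /\ (2 <= t \/ t <= -2))%Z ->
  exists l, l * l - IZR t * l + IZR d = 0 /\ -1 <= l <= 1.
Proof.
  intros H.
  set (T := IZR t).
  assert (HD : 0 <= T * T - 4 * IZR d).
  { destruct H as [[-> [Ht|Ht]]|[-> [Ht|Ht]]]; apply IZR_le in Ht; unfold T; nra. }
  set (s := sqrt (T * T - 4 * IZR d)).
  assert (Hs : s * s = T * T - 4 * IZR d) by (unfold s; apply sqrt_sqrt; auto).
  assert (Hs0 : 0 <= s) by (unfold s; apply sqrt_pos).
  destruct H as [[-> [Ht|Ht]]|[-> [Ht|Ht]]]; apply IZR_le in Ht; fold T in Ht.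
  - exists ((T - s) / 2). split. fold T. nra.
    assert (s <= T) by nra. assert (T - 2 <= s) by nra. lra.
  - exists ((T + s) / 2). split. fold T. nra.
    assert (s <= - T) by nra. assert (- T - 2 <= s) by nra. lra.
  - exists ((T - s) / 2). split. fold T. nra.
    assert (T <= s) by nra. assert (s <= T + 2) by nra. lra.
  - exists ((T + s) / 2). split. fold T. nra.
    assert (- T <= s) by nra. assert (s <= 2 - T) by nra. lra.
Qed.

Lemma absprod3 a b : Z.abs (a * b) = 3%Z -> (Z.abs b = 1 \/ (Z.abs a = 1 /\ Z.abs b = 3))%Z.
Proof.
  intros H. rewrite Z.abs_mul in H.
  pose proof (Z.abs_nonneg a); pose proof (Z.abs_nonneg b).
  set (x := Z.abs a) in *. set (y := Z.abs b) in *.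
  assert (y <> 0%Z) by (intro E; rewrite E in H; lia).
  assert (x <> 0%Z) by (intro E; rewrite E in H; lia).
  assert (1 <= y <= 3)%Z by nia.
  assert (y = 1 \/ y = 2 \/ y = 3)%Z as [E|[E|E]] by lia; rewrite E in H; lia.
Qed.

Lemma classify A : expanding A -> Z.abs (detZ A) = 3%Z ->
  (detZ A = 3 /\ -3 <= m11 A + m22 A <= 3 \/ detZ A = -3 /\ -1 <= m11 A + m22 A <= 1)%Z.
Proof.
  intros Hexp Hdet.
  assert (Hd : (detZ A = 3 \/ detZ A = -3)%Z) by lia.
  destruct (Z.eq_dec (m12 A) 0) as [H12|H12].
  - exfalso. unfold detZ in *. rewrite H12 in *.
    assert (Hz : Z.abs (m11 A * m22 A) = 3%Z) by (rewrite Z.mul_0_l, Z.sub_0_r in Hdet; auto).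
    destruct (absprod3 _ _ Hz) as [H22|[H11 H22]].
    + apply (small_eig A (IZR (m22 A)) 0 1).
      * right; lra.
      * rewrite H12. ring.
      * ring.
      * assert (m22 A = 1 \/ m22 A = -1)%Z as [E|E] by lia; rewrite E; lra.
      * exact Hexp.
    + apply (small_eig A (IZR (m11 A)) (IZR (m11 A - m22 A)) (IZR (m21 A))).
      * left. apply not_0_IZR. lia.
      * rewrite H12, minus_IZR. ring.
      * rewrite minus_IZR. ring.
      * assert (m11 A = 1 \/ m11 A = -1)%Z as [E|E] by lia; rewrite E; lra.
      * exact Hexp.
  - destruct Hd as [Hd|Hd].
    + destruct (Z_le_gt_dec (-3) (m11 A + m22 A)); destruct (Z_le_gt_dec (m11 A + m22 A) 3);
      try (left; split; auto; lia).
      all: exfalso;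
      (destruct (quad_root (m11 A + m22 A) (detZ A)) as [lam [Hl1 Hl2]]; [lia|]);
      (apply (small_eig A lam (IZR (m12 A)) (lam - IZR (m11 A))); auto;
        [left; apply not_0_IZR; auto | ring |
         unfold detZ in Hl1; rewrite plus_IZR, minus_IZR, !mult_IZR in Hl1; nra]).
    + destruct (Z_le_gt_dec (-1) (m11 A + m22 A)); destruct (Z_le_gt_dec (m11 A + m22 A) 1);
      try (right; split; auto; lia).
      all: exfalso;
      (destruct (quad_root (m11 A + m22 A) (detZ A)) as [lam [Hl1 Hl2]]; [lia|]);
      (apply (small_eig A lam (IZR (m12 A)) (lam - IZR (m11 A))); auto;
        [left; apply not_0_IZR; auto | ring |
         unfold detZ in Hl1; rewrite plus_IZR, minus_IZR, !mult_IZR in Hl1; nra]).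
Qed.

Lemma sa_iff A v k : detZ A <> 0%Z -> lin_indep2 v (mapply A v) ->
  (connected2 (self_affine_set A (DA A v k)) <-> connected2 (TT (Mt A) (DR k))).
Proof.
  intros hd hv. split.
  - apply conn_image with (G := Qm A v). intros y. split.
    + intros Hy. exists (mv (Pm A v) y). split.
      * apply transport; auto. exists y; auto.
      * rewrite QP; auto.
    + intros [x [Sx ->]]. apply transport in Sx as [y [Ty ->]]; auto. rewrite QP; auto.
  - apply conn_image with (G := Pm A v). intros x. apply transport; auto.
Qed.

Theorem theorem1p1 (A : mat2Z) (k : Z) (v : pt)
  (hexp : expanding A)
  (hdet : Z.abs (detZ A) = 3%Z)
  (hk : k <> 0%Z)
  (hv : lin_indep2 v (mapply A v)) :
  connected2 (self_affine_set A (pzero :: v :: pscale (IZR k) (mapply A v) :: nil))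
  <-> (k = 1%Z \/ k = (-1)%Z).
Proof.
  assert (hd : detZ A <> 0%Z) by lia.
  change (pzero :: v :: pscale (IZR k) (mapply A v) :: nil) with (DA A v k).
  rewrite (sa_iff A v k hd hv). unfold Mt.
  destruct (classify A hexp hdet) as [[Hd Ht]|[Hd Ht]]; rewrite Hd.
  - assert (m11 A + m22 A = -3 \/ m11 A + m22 A = -2 \/ m11 A + m22 A = -1 \/ m11 A + m22 A = 0 \/
            m11 A + m22 A = 1 \/ m11 A + m22 A = 2 \/ m11 A + m22 A = 3)%Z as HH by lia.
    destruct HH as [E|[E|[E|[E|[E|[E|E]]]]]]; rewrite E; simpl Z.opp.
    + apply iff_3_3; auto.
    + apply iff_2_3; auto.
    + apply iff_1_3; auto.
    + apply iff_0_3; auto.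
    + apply iff_m1_3; auto.
    + apply iff_m2_3; auto.
    + apply iff_m3_3; auto.
  - assert (m11 A + m22 A = -1 \/ m11 A + m22 A = 0 \/ m11 A + m22 A = 1)%Z as HH by lia.
    destruct HH as [E|[E|E]]; rewrite E; simpl Z.opp.
    + apply iff_1_m3; auto.
    + apply iff_0_m3; auto.
    + apply iff_m1_m3; auto.
Qed.
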